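(* There exists a sequence $\{b_n\}\subset\Lambda_{x,y}(\alpha)$ such that $\mu(\lambda,\theta,b_n)\to-\infty$ as $n\to\infty$, uniformly in $\theta\in[0,2\pi)$ and in $\lambda$ ranging over any bounded interval.
   Context: Fix $L_1,L_2>0$ and $\alpha>0$. $\Lambda_{x,y}(\alpha)$ is the set of $b\in C^1(\mathbb R^2)$ with $b\ge0$, $b(x+L_1,y)=b(x,y+L_2)=b(x,y)$, and $\int_0^{L_1}\int_0^{L_2}b\,dy\,dx=\alpha L_1L_2$. For $b\in\Lambda_{x,y}(\alpha)$, $\lambda\in\mathbb R$, and $\theta\in[0,2\pi)$, $\mu(\lambda,\theta,b)$ denotes the principal eigenvalue of $$-u_{xx}-u_{yy}+2\lambda\cos\theta\,u_x+2\lambda\sin\theta\,u_y-b(x,y)u=\mu u$$ under the periodicity conditions $u(x+L_1,y)=u(x,y+L_2)=u(x,y)$. *)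

(* Defs.v *)
From Stdlib Require Import Reals Lra.
Open Scope R_scope.

Definition cont2 (f : R -> R -> R) : Prop :=
  forall x0 y0 eps, 0 < eps -> exists d, 0 < d /\
    forall x y, Rabs (x - x0) < d -> Rabs (y - y0) < d ->
      Rabs (f x y - f x0 y0) < eps.

Definition partial_x (f fx : R -> R -> R) : Prop :=
  forall x y, derivable_pt_lim (fun t => f t y) x (fx x y).
Definition partial_y (f fy : R -> R -> R) : Prop :=
  forall x y, derivable_pt_lim (fun t => f x t) y (fy x y).

Definition C1_2 (f : R -> R -> R) : Prop :=
  cont2 f /\ exists fx fy, partial_x f fx /\ partial_y f fy /\ cont2 fx /\ cont2 fy.

Definition periodic2 (L1 L2 : R) (f : R -> R -> R) : Prop :=
  forall x y, f (x + L1) y = f x y /\ f x (y + L2) = f x y.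

Definition int_eq (f : R -> R) (a b v : R) : Prop :=
  exists pr : Riemann_integrable f a b, RiemannInt pr = v.

Definition in_Lambda (L1 L2 alpha : R) (b : R -> R -> R) : Prop :=
  C1_2 b /\ (forall x y, 0 <= b x y) /\ periodic2 L1 L2 b /\
  exists g : R -> R,
    (forall x, int_eq (fun y => b x y) 0 L2 (g x)) /\
    int_eq g 0 L1 (alpha * L1 * L2).

(* mu is the principal eigenvalue of
   -u_xx - u_yy + 2 lam cos th u_x + 2 lam sin th u_y - b u = mu u
   with (L1,L2)-periodic conditions: there is a positive periodic C^2
   eigenfunction (the principal eigenvalue is the unique eigenvalue with a
   positive eigenfunction). *)
Definition is_principal_eig (L1 L2 lam th : R) (b : R -> R -> R) (mu : R) : Prop :=
  exists u ux uy uxx uxy uyx uyy : R -> R -> R,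
    partial_x u ux /\ partial_y u uy /\
    partial_x ux uxx /\ partial_y ux uxy /\
    partial_x uy uyx /\ partial_y uy uyy /\
    cont2 u /\ cont2 ux /\ cont2 uy /\ cont2 uxx /\ cont2 uxy /\
    cont2 uyx /\ cont2 uyy /\
    periodic2 L1 L2 u /\ (forall x y, 0 < u x y) /\
    forall x y,
      - uxx x y - uyy x y + 2 * lam * cos th * ux x y
      + 2 * lam * sin th * uy x y - b x y * u x y = mu * u x y.

(* Main.v *)
Require Import Defs.
From Stdlib Require Import Reals Lra Lia Psatz ZArith Classical ClassicalEpsilon Rtopology.
Open Scope R_scope.

Lemma cont_pt_eps : forall f x0, continuity_pt f x0 ->
  forall eps, 0 < eps -> exists d, 0 < d /\ forall x, Rabs (x - x0) < d -> Rabs (f x - f x0) < eps.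
Proof.
  intros f x0 H eps He.
  destruct (H eps He) as [d [Hd H1]].
  exists d; split; auto.
  intros x Hx. destruct (Req_dec x x0) as [->|Hne].
  - unfold Rminus; rewrite Rplus_opp_r, Rabs_R0; auto.
  - apply (H1 x). split. unfold D_x, no_cond; split; auto. simpl; unfold R_dist; auto.
Qed.

Lemma cont2_const : forall c, cont2 (fun _ _ => c).
Proof. intros c x0 y0 eps He; exists 1; split; [lra|]; intros.
  unfold Rminus; rewrite Rplus_opp_r, Rabs_R0; auto. Qed.

Lemma cont2_fst : forall f, (forall x, continuity_pt f x) -> cont2 (fun x _ => f x).
Proof. intros f Hf x0 y0 eps He. destruct (cont_pt_eps f x0 (Hf x0) eps He) as [d [Hd H]].
  exists d; split; auto. Qed.

Lemma cont2_snd : forall f, (forall x, continuity_pt f x) -> cont2 (fun _ y => f y).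
Proof. intros f Hf x0 y0 eps He. destruct (cont_pt_eps f y0 (Hf y0) eps He) as [d [Hd H]].
  exists d; split; auto. Qed.

Lemma cont2_plus : forall f g, cont2 f -> cont2 g -> cont2 (fun x y => f x y + g x y).
Proof. intros f g Hf Hg x0 y0 eps He.
  destruct (Hf x0 y0 (eps/2)) as [d1 [Hd1 H1]]; [lra|].
  destruct (Hg x0 y0 (eps/2)) as [d2 [Hd2 H2]]; [lra|].
  exists (Rmin d1 d2); split; [apply Rmin_pos; auto|].
  intros x y Hx Hy.
  assert (A1 := H1 x y (Rlt_le_trans _ _ _ Hx (Rmin_l _ _)) (Rlt_le_trans _ _ _ Hy (Rmin_l _ _))).
  assert (A2 := H2 x y (Rlt_le_trans _ _ _ Hx (Rmin_r _ _)) (Rlt_le_trans _ _ _ Hy (Rmin_r _ _))).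
  replace (f x y + g x y - (f x0 y0 + g x0 y0)) with ((f x y - f x0 y0) + (g x y - g x0 y0)) by ring.
  eapply Rle_lt_trans; [apply Rabs_triang|]. lra.
Qed.

Lemma cont2_comp : forall (f : R -> R) g, cont2 g -> (forall x y, continuity_pt f (g x y)) ->
  cont2 (fun x y => f (g x y)).
Proof. intros f g Hg Hf x0 y0 eps He.
  destruct (cont_pt_eps f (g x0 y0) (Hf x0 y0) eps He) as [d1 [Hd1 H1]].
  destruct (Hg x0 y0 d1 Hd1) as [d2 [Hd2 H2]].
  exists d2; split; auto. Qed.

Lemma cont2_comp_all : forall (f : R -> R) g, cont2 g -> (forall z, continuity_pt f z) ->
  cont2 (fun x y => f (g x y)).
Proof. intros; apply cont2_comp; auto. Qed.

Lemma cont2_scal : forall c f, cont2 f -> cont2 (fun x y => c * f x y).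
Proof. intros c f Hf. apply (cont2_comp (fun z => c * z)); auto. intros; reg. Qed.

Lemma cont2_opp : forall f, cont2 f -> cont2 (fun x y => - f x y).
Proof. intros f Hf. apply (cont2_comp (fun z => - z)); auto. intros; reg. Qed.

Lemma cont2_sqr : forall f, cont2 f -> cont2 (fun x y => f x y * f x y).
Proof. intros f Hf. apply (cont2_comp (fun z => z * z)); auto. intros; reg. Qed.

Lemma cont2_ext : forall f g, (forall x y, f x y = g x y) -> cont2 f -> cont2 g.
Proof. intros f g E Hf x0 y0 eps He. destruct (Hf x0 y0 eps He) as [d [Hd H]].
  exists d; split; auto; intros; rewrite <- !E; auto. Qed.

Lemma cont2_mult : forall f g, cont2 f -> cont2 g -> cont2 (fun x y => f x y * g x y).
Proof. intros f g Hf Hg.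
  apply cont2_ext with (fun x y => /4 * ((f x y + g x y) * (f x y + g x y)) + - (/4 * ((f x y + - g x y) * (f x y + - g x y)))).
  { intros; field. }
  apply cont2_plus. apply cont2_scal, cont2_sqr, cont2_plus; auto.
  apply cont2_opp, cont2_scal, cont2_sqr, cont2_plus; auto. apply cont2_opp; auto.
Qed.

Lemma cont2_x : cont2 (fun x _ => x).
Proof. apply (cont2_fst (fun x => x)). intros; reg. Qed.
Lemma cont2_y : cont2 (fun _ y => y).
Proof. apply (cont2_snd (fun x => x)). intros; reg. Qed.

Lemma cont2_inv : forall f, cont2 f -> (forall x y, f x y <> 0) -> cont2 (fun x y => / f x y).
Proof. intros f Hf Hn. apply (cont2_comp Rinv); auto. intros x y.
  apply (continuity_pt_inv (fun z => z)); [reg|]; auto. Qed.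

Lemma cont_pt_of_eps : forall f x0,
  (forall eps, 0 < eps -> exists d, 0 < d /\ forall x, Rabs (x - x0) < d -> Rabs (f x - f x0) < eps) ->
  continuity_pt f x0.
Proof.
  intros f x0 H eps He. destruct (H eps He) as [d [Hd H1]].
  exists d; split; auto. intros x [_ Hx]. simpl in *. unfold R_dist in *. auto.
Qed.

Lemma cont2_slice_y : forall F x, cont2 F -> forall y, continuity_pt (fun y => F x y) y.
Proof. intros F x HF y0. apply cont_pt_of_eps. intros eps He.
  destruct (HF x y0 eps He) as [d [Hd H]]. exists d; split; auto.
  intros y Hy. apply H; auto. unfold Rminus; rewrite Rplus_opp_r, Rabs_R0; auto. Qed.

Lemma cont2_slice_x : forall F y, cont2 F -> forall x, continuity_pt (fun x => F x y) x.
Proof. intros F y HF x0. apply cont_pt_of_eps. intros eps He.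
  destruct (HF x0 y eps He) as [d [Hd H]]. exists d; split; auto.
  intros x Hx. apply H; auto. unfold Rminus; rewrite Rplus_opp_r, Rabs_R0; auto. Qed.

Lemma unif_y : forall F a b, cont2 F -> a <= b -> forall x0 eps, 0 < eps ->
  exists d, 0 < d /\ forall x y, a <= y <= b -> Rabs (x - x0) < d -> Rabs (F x y - F x0 y) < eps.
Proof.
  intros F a b HF Hab x0 eps He.
  apply NNPP; intro Hn.
  assert (Hs : forall n : nat, exists xy : R * R, a <= snd xy <= b /\ Rabs (fst xy - x0) < / (INR n + 1)
             /\ eps <= Rabs (F (fst xy) (snd xy) - F x0 (snd xy))).
  { intro n. apply NNPP; intro Hc. apply Hn. exists (/ (INR n + 1)); split.
    - apply Rinv_0_lt_compat. pose proof (pos_INR n); lra.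
    - intros x y Hy Hx. apply Rnot_le_lt; intro Hle. apply Hc. exists (x, y); simpl; auto. }
  destruct (choice _ Hs) as [s Hsp].
  destruct (Bolzano_Weierstrass (fun n => snd (s n)) (fun c => a <= c <= b) (compact_P3 a b))
    as [l Hl].
  { intro n; apply (Hsp n). }
  destruct (HF x0 l (eps/2)) as [d [Hd Hc]]; [lra|].
  destruct (archimed (/ d)) as [Hup _].
  assert (Hz : (0 <= up (/ d))%Z).
  { apply le_IZR. pose proof (Rinv_0_lt_compat d Hd). simpl; lra. }
  set (N := Z.to_nat (up (/ d))).
  assert (HN : / d < INR N).
  { unfold N. rewrite INR_IZR_INZ, Z2Nat.id; auto. }
  destruct (Hl (disc l (mkposreal d Hd)) N) as [p [Hp Hv]].
  { exists (mkposreal d Hd). intros z Hz'; auto. }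
  unfold disc in Hv; simpl in Hv.
  destruct (Hsp p) as [Hy [Hx Hf]].
  assert (Hpd : / (INR p + 1) < d).
  { apply le_INR in Hp. rewrite <- (Rinv_inv d). apply Rinv_lt_contravar.
    - apply Rmult_lt_0_compat. apply Rinv_0_lt_compat; auto. pose proof (pos_INR p); lra.
    - lra. }
  assert (A1 := Hc (fst (s p)) (snd (s p)) ltac:(lra) Hv).
  assert (A2 := Hc x0 (snd (s p)) ltac:(unfold Rminus; rewrite Rplus_opp_r, Rabs_R0; auto) Hv).
  assert (Rabs (F (fst (s p)) (snd (s p)) - F x0 (snd (s p))) < eps).
  { replace (F (fst (s p)) (snd (s p)) - F x0 (snd (s p))) with
      ((F (fst (s p)) (snd (s p)) - F x0 l) - (F x0 (snd (s p)) - F x0 l)) by ring.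
    eapply Rle_lt_trans; [apply Rabs_triang|]. rewrite Rabs_Ropp. lra. }
  lra.
Qed.

Lemma evt2 : forall F a1 b1 a2 b2, cont2 F -> a1 <= b1 -> a2 <= b2 ->
  exists p1 p2, a1 <= p1 <= b1 /\ a2 <= p2 <= b2 /\
    forall x y, a1 <= x <= b1 -> a2 <= y <= b2 -> F p1 p2 <= F x y.
Proof.
  intros F a1 b1 a2 b2 HF H1 H2.
  assert (Hm : forall x, exists y, a2 <= y <= b2 /\ forall y', a2 <= y' <= b2 -> F x y <= F x y').
  { intro x. destruct (continuity_ab_min (fun y => F x y) a2 b2 H2) as [m [Hm1 Hm2]].
    { intros; apply cont2_slice_y; auto. }
    exists m; split; auto. }
  destruct (choice _ Hm) as [ym Hym].
  set (g := fun x => F x (ym x)).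
  assert (Hg : forall x0, continuity_pt g x0).
  { intro x0. apply cont_pt_of_eps. intros eps He.
    destruct (unif_y F a2 b2 HF H2 x0 eps He) as [d [Hd Hu]].
    exists d; split; auto. intros x Hx. unfold g.
    destruct (Hym x) as [Hx1 Hx2]. destruct (Hym x0) as [Hx01 Hx02].
    assert (B1 := Hu x (ym x) Hx1 Hx). assert (B2 := Hu x (ym x0) Hx01 Hx).
    assert (C1 := Hx2 (ym x0) Hx01). assert (C2 := Hx02 (ym x) Hx1).
    apply Rabs_def1; apply Rabs_def2 in B1; apply Rabs_def2 in B2; lra. }
  destruct (continuity_ab_min g a1 b1 H1) as [x1 [Hx1 Hx1r]].
  { intros; apply Hg. }
  exists x1, (ym x1). destruct (Hym x1) as [Hy1 Hy2].
  split; auto; split; auto.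
  intros x y Hx Hy. apply Rle_trans with (g x). apply (Hx1 x Hx).
  unfold g. apply (proj2 (Hym x)); auto.
Qed.

Lemma deriv_sign_right : forall g x0 l, derivable_pt_lim g x0 l -> l < 0 ->
  forall d, 0 < d -> exists h, 0 < h < d /\ g (x0 + h) < g x0.
Proof.
  intros g x0 l H Hl d Hd.
  destruct (H (- l / 2)) as [del Hdel]; [lra|].
  set (h := Rmin d del / 2).
  assert (Hh : 0 < h) by (unfold h; pose proof (cond_pos del); assert (0 < Rmin d del) by (apply Rmin_pos; lra); lra).
  assert (Hh2 : h < Rmin d del) by (unfold h; assert (0 < Rmin d del) by (apply Rmin_pos; pose proof (cond_pos del); lra); lra).
  exists h; split; [split; [lra|]|].
  - pose proof (Rmin_l d del); lra.
  - assert (A := Hdel h ltac:(lra) ltac:(rewrite Rabs_right; [pose proof (Rmin_r d del); lra|lra])).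
    apply Rabs_def2 in A. destruct A as [A1 A2].
    assert (B : (g (x0 + h) - g x0) / h < 0) by lra.
    assert (C : (g (x0 + h) - g x0) < 0).
    { replace (g (x0 + h) - g x0) with ((g (x0 + h) - g x0) / h * h) by (field; lra).
      apply Rmult_neg_pos; auto. }
    lra.
Qed.

Lemma deriv_sign_left : forall g x0 l, derivable_pt_lim g x0 l -> 0 < l ->
  forall d, 0 < d -> exists h, 0 < h < d /\ g (x0 - h) < g x0.
Proof.
  intros g x0 l H Hl d Hd.
  destruct (H (l / 2)) as [del Hdel]; [lra|].
  set (h := Rmin d del / 2).
  assert (Hm : 0 < Rmin d del) by (apply Rmin_pos; pose proof (cond_pos del); lra).
  assert (Hh : 0 < h) by (unfold h; lra).
  exists h; split; [split; [lra|]|].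
  - pose proof (Rmin_l d del); unfold h; lra.
  - assert (A := Hdel (- h) ltac:(lra) ltac:(rewrite Rabs_Ropp, Rabs_right; [pose proof (Rmin_r d del); unfold h; lra|lra])).
    apply Rabs_def2 in A. destruct A as [A1 A2].
    assert (B : (g (x0 + - h) - g x0) / - h > 0) by lra.
    assert (C : (g (x0 + - h) - g x0) < 0).
    { replace (g (x0 + - h) - g x0) with ((g (x0 + - h) - g x0) / - h * - h) by (field; lra).
      apply Rmult_pos_neg; lra. }
    replace (x0 - h) with (x0 + - h) by ring. lra.
Qed.

Lemma second_deriv_test : forall g g1 x0 d2 del, 0 < del ->
  (forall x, Rabs (x - x0) < del -> g x0 <= g x) ->
  (forall x, Rabs (x - x0) < del -> derivable_pt_lim g x (g1 x)) ->
  derivable_pt_lim g1 x0 d2 -> g1 x0 = 0 /\ 0 <= d2.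
Proof.
  intros g g1 x0 d2 del Hdel Hmin Hd Hd2.
  assert (H0 : Rabs (x0 - x0) < del) by (unfold Rminus; rewrite Rplus_opp_r, Rabs_R0; auto).
  assert (E : g1 x0 = 0).
  { destruct (Rtotal_order (g1 x0) 0) as [Hl|[He|Hg]]; auto.
    - destruct (deriv_sign_right g x0 _ (Hd x0 H0) Hl del Hdel) as [h [Hh Hg']].
      assert (g x0 <= g (x0 + h)) by (apply Hmin; replace (x0 + h - x0) with h by ring; rewrite Rabs_right; lra).
      lra.
    - destruct (deriv_sign_left g x0 _ (Hd x0 H0) Hg del Hdel) as [h [Hh Hg']].
      assert (g x0 <= g (x0 - h)) by (apply Hmin; replace (x0 - h - x0) with (- h) by ring; rewrite Rabs_Ropp, Rabs_right; lra).
      lra. }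
  split; auto.
  apply Rnot_lt_le; intro Hl.
  destruct (Hd2 (- d2 / 2)) as [dl Hdl]; [lra|].
  set (h := Rmin del dl / 2).
  assert (Hm : 0 < Rmin del dl) by (apply Rmin_pos; pose proof (cond_pos dl); lra).
  assert (Hh : 0 < h) by (unfold h; lra).
  assert (Hh1 : h < del) by (pose proof (Rmin_l del dl); unfold h; lra).
  assert (Hh2 : h < dl) by (pose proof (Rmin_r del dl); unfold h; lra).
  destruct (MVT_cor2 g g1 x0 (x0 + h)) as [c [Hc Hcr]]; [lra| |].
  { intros c Hc. apply Hd. rewrite Rabs_right; lra. }
  assert (Hneg : g1 c < 0).
  { assert (A := Hdl (c - x0) ltac:(lra) ltac:(rewrite Rabs_right; lra)).
    replace (x0 + (c - x0)) with c in A by ring. rewrite E in A.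
    apply Rabs_def2 in A. destruct A as [A1 A2].
    assert (B : (g1 c - 0) / (c - x0) < 0) by lra.
    replace (g1 c) with ((g1 c - 0) / (c - x0) * (c - x0)) by (field; lra).
    apply Rmult_neg_pos; lra. }
  assert (g x0 <= g (x0 + h)) by (apply Hmin; replace (x0 + h - x0) with h by ring; rewrite Rabs_right; lra).
  assert (g1 c * (x0 + h - x0) < 0) by (apply Rmult_neg_pos; lra).
  lra.
Qed.

Lemma D_id : forall x, derivable_pt_lim (fun y => y) x 1.
Proof. intros; apply derivable_pt_lim_id. Qed.
Lemma D_const : forall c x, derivable_pt_lim (fun _ => c) x 0.
Proof. intros; apply (derivable_pt_lim_const c). Qed.
Lemma D_plus : forall f g x l1 l2, derivable_pt_lim f x l1 -> derivable_pt_lim g x l2 ->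
  derivable_pt_lim (fun y => f y + g y) x (l1 + l2).
Proof. intros; apply (derivable_pt_lim_plus f g); auto. Qed.
Lemma D_minus : forall f g x l1 l2, derivable_pt_lim f x l1 -> derivable_pt_lim g x l2 ->
  derivable_pt_lim (fun y => f y - g y) x (l1 - l2).
Proof. intros; apply (derivable_pt_lim_minus f g); auto. Qed.
Lemma D_mult : forall f g x l1 l2, derivable_pt_lim f x l1 -> derivable_pt_lim g x l2 ->
  derivable_pt_lim (fun y => f y * g y) x (l1 * g x + f x * l2).
Proof. intros; apply (derivable_pt_lim_mult f g); auto. Qed.
Lemma D_comp : forall f g x l1 l2, derivable_pt_lim g x l1 -> derivable_pt_lim f (g x) l2 ->
  derivable_pt_lim (fun y => f (g y)) x (l2 * l1).
Proof. intros; apply (derivable_pt_lim_comp g f); auto. Qed.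
Lemma D_eq : forall f x l l', derivable_pt_lim f x l -> l = l' -> derivable_pt_lim f x l'.
Proof. intros; subst; auto. Qed.
Lemma D_scal : forall c f x l, derivable_pt_lim f x l -> derivable_pt_lim (fun y => c * f y) x (c * l).
Proof. intros. apply D_eq with (0 * f x + c * l). apply (D_mult (fun _ => c) f); [apply D_const|auto]. ring. Qed.

Lemma D_quad : forall Om c s, derivable_pt_lim (fun s => Om * (s * s + c)) s (2 * Om * s).
Proof. intros. apply D_eq with (Om * ((1 * s + s * 1) + 0)). apply D_scal, D_plus; [apply (D_mult (fun y => y) (fun y => y)); apply D_id| apply D_const]. ring. Qed.

Lemma radial_d1 : forall (G G1 : R -> R) a b Om c s,
  a < Om * (s * s + c) < b ->
  (forall w, a < w < b -> derivable_pt_lim G w (G1 w)) ->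
  derivable_pt_lim (fun s => G (Om * (s * s + c))) s (G1 (Om * (s * s + c)) * (2 * Om * s)).
Proof. intros. apply D_comp; [apply D_quad| auto]. Qed.

Lemma radial_d2 : forall (G1 G2 : R -> R) a b Om c s,
  a < Om * (s * s + c) < b ->
  (forall w, a < w < b -> derivable_pt_lim G1 w (G2 w)) ->
  derivable_pt_lim (fun s => G1 (Om * (s * s + c)) * (2 * Om * s)) s
    (G2 (Om * (s * s + c)) * (2 * Om * s) * (2 * Om * s) + G1 (Om * (s * s + c)) * (2 * Om)).
Proof. intros. apply D_eq with (G2 (Om * (s * s + c)) * (2 * Om * s) * (2 * Om * s) + G1 (Om * (s * s + c)) * (2 * Om * 1)).
  apply (D_mult (fun s => G1 (Om * (s * s + c))) (fun s => 2 * Om * s)).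
  apply (D_comp G1 (fun s => Om * (s * s + c))); [apply D_quad|auto].
  apply D_scal, D_id. ring. Qed.

Definition Lf w := - ln 2 - / 2 * ln w + w / 2.
Definition Lf1 w := - / (2 * w) + / 2.
Definition Lf2 w := / (2 * (w * w)).
Definition Of w := exp (2 - 8 * w) / 8.
Definition Of1 w := - 8 * Of w.
Definition Of2 w := 64 * Of w.
Definition Qf w0 w := Lf w0 + 1 - w / w0.
Definition Qf1 (w0 : R) (w : R) := - / w0.
Definition Qf2 (w0 w : R) := 0.
Definition Phi w0 w := if Rle_dec w w0 then Qf w0 w else if Rle_dec w (/4) then Lf w else Of w.

Lemma ln_le_xm1 : forall x, 0 < x -> ln x <= x - 1.
Proof. intros x Hx. pose proof (exp_ineq1_le (ln x)). rewrite exp_ln in H; lra. Qed.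

Lemma ln_ge_1m : forall x, 0 < x -> 1 - / x <= ln x.
Proof. intros x Hx. pose proof (ln_le_xm1 (/ x) (Rinv_0_lt_compat x Hx)).
  rewrite ln_Rinv in H; lra. Qed.

Lemma ln_div : forall a b, 0 < a -> 0 < b -> ln (b / a) = ln b - ln a.
Proof. intros. unfold Rdiv. rewrite ln_mult, ln_Rinv; try lra. apply Rinv_0_lt_compat; auto. Qed.

Lemma Lf_quarter : Lf (/ 4) = / 8.
Proof. unfold Lf. rewrite ln_Rinv by lra. replace 4 with (2 * 2) by ring.
  rewrite ln_mult by lra. field. Qed.

Lemma Of_quarter : Of (/ 4) = / 8.
Proof. unfold Of. replace (2 - 8 * / 4) with 0 by field. rewrite exp_0; field. Qed.

Lemma Lf_decr : forall a b, 0 < a -> a <= b -> b <= 1 -> Lf b <= Lf a.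
Proof. intros a b Ha Hab Hb. unfold Lf.
  assert (H := ln_ge_1m (b / a) ltac:(apply Rdiv_lt_0_compat; lra)).
  rewrite ln_div in H by lra.
  assert (E : 1 - / (b / a) = (b - a) / b) by (field; lra). rewrite E in H.
  assert ((b - a) / b >= b - a).
  { apply Rle_ge. apply Rmult_le_reg_r with b; [lra|]. unfold Rdiv; rewrite Rmult_assoc, Rinv_l by lra.
    nra. }
  lra. Qed.

Lemma Lf_ge_Qf : forall w0 w, 0 < w0 -> w0 <= w -> Qf w0 w <= Lf w.
Proof. intros w0 w H0 H. unfold Qf, Lf.
  assert (A := ln_le_xm1 (w / w0) ltac:(apply Rdiv_lt_0_compat; lra)).
  rewrite ln_div in A by lra.
  assert (E : w / w0 - 1 = (w - w0) / w0) by (field; lra). rewrite E in A.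
  assert (B : (w - w0) / w0 >= 0) by (apply Rle_ge; unfold Rdiv; apply Rmult_le_pos; [lra|left; apply Rinv_0_lt_compat; lra]).
  unfold Rdiv in *. nra. Qed.

Lemma Lf_le_Of : forall w, / 4 <= w <= / 3 -> Lf w <= Of w.
Proof. intros w [H1 H2]. unfold Lf, Of.
  assert (A := ln_ge_1m (w / (/ 4)) ltac:(apply Rdiv_lt_0_compat; lra)).
  rewrite ln_div in A by lra. rewrite ln_Rinv in A by lra.
  replace 4 with (2 * 2) in A by ring. rewrite ln_mult in A by lra.
  assert (E : / (w / / (2 * 2)) = / (4 * w)) by (field; lra). rewrite E in A.
  assert (B := exp_ineq1_le (2 - 8 * w)).
  assert (C : / (4 * w) * (4 * w) = 1) by (field; lra).
  assert (D : 0 < / (4 * w)) by (apply Rinv_0_lt_compat; lra).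
  (* need: -ln2 - 1/2 ln w + w/2 <= (3 - 8w)/8 *)
  assert (F : - / 2 * ln w <= ln 2 - / 2 + / 2 * / (4 * w)) by lra.
  assert (G : / 2 * / (4 * w) + w / 2 - / 2 <= (3 - 8 * w) / 8).
  { assert (12 * w * w - 7 * w + 1 <= 0) by nra.
    assert (/ (4 * w) <= 7 / 4 - 3 * w).
    { apply Rmult_le_reg_r with (4 * w); [lra|]. rewrite C. nra. }
    lra. }
  lra. Qed.

Lemma D_Lf : forall w, 0 < w -> derivable_pt_lim Lf w (Lf1 w).
Proof. intros w Hw.
  apply derivable_pt_lim_ext with (fun x => (- ln 2 + (- / 2) * ln x) + / 2 * x).
  { intro z; unfold Lf; field. }
  apply D_eq with ((0 + - / 2 * / w) + / 2 * 1).
  apply D_plus. apply D_plus. apply D_const. apply D_scal. apply derivable_pt_lim_ln; auto.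
  apply D_scal, D_id. unfold Lf1; field; lra. Qed.

Lemma D_inv : forall w, w <> 0 -> derivable_pt_lim (fun x => / x) w (- / (w * w)).
Proof. intros w Hw.
  apply derivable_pt_lim_ext with (div_fct (fun _ => 1) (fun x => x)).
  { intro z; unfold div_fct, Rdiv; ring. }
  apply D_eq with ((0 * w - 1 * 1) / Rsqr w).
  apply derivable_pt_lim_div; auto. apply D_const. apply D_id.
  unfold Rsqr; field; auto. Qed.

Lemma D_Lf1 : forall w, 0 < w -> derivable_pt_lim Lf1 w (Lf2 w).
Proof. intros w Hw.
  apply derivable_pt_lim_ext with (fun x => (- / 2) * / x + / 2).
  { intro z; unfold Lf1. destruct (Req_dec z 0) as [->|Hz].
    - rewrite Rmult_0_r, Rinv_0, Rmult_0_r. ring.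
    - field; auto. }
  apply D_eq with (- / 2 * (- / (w * w)) + 0).
  apply D_plus; [|apply D_const]. apply D_scal.
  apply D_inv; lra. unfold Lf2; field; lra. Qed.

Lemma D_Of : forall w, derivable_pt_lim Of w (Of1 w).
Proof. intro w. unfold Of, Of1, Of.
  apply derivable_pt_lim_ext with (fun x => / 8 * exp (2 - 8 * x)).
  { intro; field. }
  apply D_eq with (/ 8 * (exp (2 - 8 * w) * (0 - 8 * 1))).
  apply D_scal. apply (D_comp exp (fun x => 2 - 8 * x)).
  apply D_minus. apply D_const. apply D_scal, D_id. apply derivable_pt_lim_exp. field. Qed.

Lemma D_Of1 : forall w, derivable_pt_lim Of1 w (Of2 w).
Proof. intro w. unfold Of1, Of2. apply D_eq with (- 8 * Of1 w). apply D_scal, D_Of.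
  unfold Of1; ring. Qed.

Lemma D_Qf : forall w0 w, 0 < w0 -> derivable_pt_lim (Qf w0) w (Qf1 w0 w).
Proof. intros w0 w H. unfold Qf, Qf1.
  apply derivable_pt_lim_ext with (fun x => (Lf w0 + 1) + (- / w0) * x).
  { intro; field; lra. }
  apply D_eq with (0 + - / w0 * 1). apply D_plus. apply D_const. apply D_scal, D_id. ring. Qed.

Lemma D_Qf1 : forall w0 w, derivable_pt_lim (Qf1 w0) w (Qf2 w0 w).
Proof. intros. unfold Qf1, Qf2. apply D_const. Qed.

Lemma lim_cont : forall f x l, derivable_pt_lim f x l -> continuity_pt f x.
Proof. intros f x l H. apply derivable_continuous_pt. exists l; auto. Qed.

Lemma glue_cont : forall f g h x0 r, 0 < r ->
  (forall y, Rabs (y - x0) < r -> f y = g y \/ f y = h y) ->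
  f x0 = g x0 -> f x0 = h x0 -> continuity_pt g x0 -> continuity_pt h x0 -> continuity_pt f x0.
Proof.
  intros f g h x0 r Hr Hy Hg Hh Cg Ch. apply cont_pt_of_eps. intros eps He.
  destruct (cont_pt_eps g x0 Cg eps He) as [d1 [Hd1 H1]].
  destruct (cont_pt_eps h x0 Ch eps He) as [d2 [Hd2 H2]].
  exists (Rmin r (Rmin d1 d2)). split. apply Rmin_pos; auto; apply Rmin_pos; auto.
  intros x Hx. pose proof (Rmin_l r (Rmin d1 d2)). pose proof (Rmin_r r (Rmin d1 d2)).
  pose proof (Rmin_l d1 d2). pose proof (Rmin_r d1 d2).
  destruct (Hy x ltac:(lra)) as [E|E]; rewrite E.
  - rewrite Hg; apply H1; lra.
  - rewrite Hh; apply H2; lra.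
Qed.

Section PhiProps.
Variable w0 : R.
Hypothesis Hw0 : 0 < w0 <= / 8.

Lemma H_ge : / 8 <= Lf w0.
Proof. rewrite <- Lf_quarter. apply Lf_decr; lra. Qed.

Lemma Qf_w0 : Qf w0 w0 = Lf w0.
Proof. unfold Qf. field. lra. Qed.

Lemma Phi_pos : forall w, 0 < Phi w0 w.
Proof. intro w. pose proof H_ge. unfold Phi.
  destruct (Rle_dec w w0).
  - unfold Qf. assert (w / w0 <= 1). { apply Rmult_le_reg_r with w0; [lra|].
      unfold Rdiv; rewrite Rmult_assoc, Rinv_l by lra; lra. } lra.
  - destruct (Rle_dec w (/4)).
    + assert (Lf (/4) <= Lf w) by (apply Lf_decr; lra). rewrite Lf_quarter in H0; lra.
    + unfold Of. assert (0 < exp (2 - 8 * w)) by apply exp_pos. lra.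
Qed.

Lemma Of_decr : forall a b, a <= b -> Of b <= Of a.
Proof. intros a b H. unfold Of. destruct (Req_dec a b) as [->|Hn]; [lra|].
  assert (exp (2 - 8 * b) < exp (2 - 8 * a)) by (apply exp_increasing; lra). lra. Qed.

Lemma Phi_decr : forall a b, a <= b -> Phi w0 b <= Phi w0 a.
Proof. intros a b Hab. pose proof H_ge. pose proof Lf_quarter. pose proof Of_quarter.
  unfold Phi.
  destruct (Rle_dec a w0); destruct (Rle_dec b w0).
  - unfold Qf. unfold Rdiv. assert (a * / w0 <= b * / w0).
    { apply Rmult_le_compat_r; auto. left; apply Rinv_0_lt_compat; lra. } lra.
  - assert (Lf w0 <= Qf w0 a).
    { unfold Qf. assert (a / w0 <= 1). { apply Rmult_le_reg_r with w0; [lra|].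
      unfold Rdiv; rewrite Rmult_assoc, Rinv_l by lra; lra. } lra. }
    destruct (Rle_dec b (/4)).
    + assert (Lf b <= Lf w0) by (apply Lf_decr; lra). lra.
    + assert (Of b <= Of (/4)) by (apply Of_decr; lra). lra.
  - lra.
  - destruct (Rle_dec a (/4)); destruct (Rle_dec b (/4)).
    + apply Lf_decr; lra.
    + assert (Of b <= Of (/4)) by (apply Of_decr; lra). assert (Lf (/4) <= Lf a) by (apply Lf_decr; lra). lra.
    + lra.
    + apply Of_decr; auto.
Qed.

Lemma Lf_cont : forall w, 0 < w -> continuity_pt Lf w.
Proof. intros; eapply lim_cont; apply D_Lf; auto. Qed.

Lemma Phi_cont : forall w, continuity_pt (Phi w0) w.
Proof.
  intro w.
  set (P2 := fun z => if Rle_dec z (/4) then Lf z else Of z).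
  assert (C2 : forall z, 0 < z -> continuity_pt P2 z).
  { intros z Hz. destruct (Rtotal_order z (/4)) as [Hl|[He|Hg]].
    - apply glue_cont with Lf Lf (Rmin z (/4 - z)).
      + apply Rmin_pos; lra.
      + intros y Hy. left. unfold P2. pose proof (Rmin_r z (/4 - z)). destruct (Rle_dec y (/4)); auto.
        apply Rabs_def2 in Hy. lra.
      + unfold P2; destruct (Rle_dec z (/4)); auto; lra.
      + unfold P2; destruct (Rle_dec z (/4)); auto; lra.
      + apply Lf_cont; auto.
      + apply Lf_cont; auto.
    - apply glue_cont with Lf Of (/8).
      + lra.
      + intros y Hy. unfold P2. destruct (Rle_dec y (/4)); auto.
      + unfold P2; destruct (Rle_dec z (/4)); auto; lra.
      + unfold P2; destruct (Rle_dec z (/4)); [|lra]. subst z. rewrite Lf_quarter, Of_quarter; auto.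
      + apply Lf_cont; lra.
      + eapply lim_cont; apply D_Of.
    - apply glue_cont with Of Of (z - /4).
      + lra.
      + intros y Hy. left. unfold P2. destruct (Rle_dec y (/4)); auto.
        apply Rabs_def2 in Hy. lra.
      + unfold P2; destruct (Rle_dec z (/4)); auto; lra.
      + unfold P2; destruct (Rle_dec z (/4)); auto; lra.
      + eapply lim_cont; apply D_Of.
      + eapply lim_cont; apply D_Of. }
  assert (CQ : forall z, continuity_pt (Qf w0) z).
  { intro z; eapply lim_cont; apply D_Qf; lra. }
  assert (E : forall z, Phi w0 z = if Rle_dec z w0 then Qf w0 z else P2 z).
  { intro z; unfold Phi, P2; auto. }
  destruct (Rtotal_order w w0) as [Hl|[He|Hg]].
  - apply glue_cont with (Qf w0) (Qf w0) (w0 - w); [lra| | | | auto | auto].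
    + intros y Hy. left. rewrite E. destruct (Rle_dec y w0); auto. apply Rabs_def2 in Hy; lra.
    + rewrite E; destruct (Rle_dec w w0); auto; lra.
    + rewrite E; destruct (Rle_dec w w0); auto; lra.
  - apply glue_cont with (Qf w0) P2 (w0); [lra| | | | auto | apply C2; lra].
    + intros y Hy. rewrite E. destruct (Rle_dec y w0); auto.
    + rewrite E; destruct (Rle_dec w w0); auto; lra.
    + rewrite E; destruct (Rle_dec w w0); [|lra]. subst w. rewrite Qf_w0.
      unfold P2; destruct (Rle_dec w0 (/4)); auto; lra.
  - apply glue_cont with P2 P2 (w - w0); [lra| | | | apply C2; lra | apply C2; lra].
    + intros y Hy. left. rewrite E. destruct (Rle_dec y w0); auto. apply Rabs_def2 in Hy; lra.
    + rewrite E; destruct (Rle_dec w w0); auto; lra.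
    + rewrite E; destruct (Rle_dec w w0); auto; lra.
Qed.

End PhiProps.

Lemma contact : forall (u ux uy uxx uyy P P1 P2 : R -> R -> R) , True.
Proof. auto. Qed.

Lemma contact_x : forall (u ux uxx : R -> R -> R) (P P1 P2 : R -> R) a b Om t p1 p2 del,
  partial_x u ux -> partial_x ux uxx -> 0 < del ->
  (forall x y, Rabs (x - p1) < del -> Rabs (y - p2) < del -> a < Om * (x * x + y * y) < b) ->
  (forall w, a < w < b -> derivable_pt_lim P w (P1 w)) ->
  (forall w, a < w < b -> derivable_pt_lim P1 w (P2 w)) ->
  (forall x y, Rabs (x - p1) < del -> Rabs (y - p2) < del -> t * P (Om * (x * x + y * y)) <= u x y) ->
  u p1 p2 = t * P (Om * (p1 * p1 + p2 * p2)) ->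
  ux p1 p2 = t * (P1 (Om * (p1 * p1 + p2 * p2)) * (2 * Om * p1)) /\
  t * (P2 (Om * (p1 * p1 + p2 * p2)) * (2 * Om * p1) * (2 * Om * p1) + P1 (Om * (p1 * p1 + p2 * p2)) * (2 * Om)) <= uxx p1 p2.
Proof.
  intros u ux uxx P P1 P2 a b Om t p1 p2 del Hux Huxx Hdel Hw HP HP1 Hle Heq.
  assert (Hp2 : Rabs (p2 - p2) < del) by (unfold Rminus; rewrite Rplus_opp_r, Rabs_R0; auto).
  destruct (second_deriv_test (fun s => u s p2 - t * P (Om * (s * s + p2 * p2)))
     (fun s => ux s p2 - t * (P1 (Om * (s * s + p2 * p2)) * (2 * Om * s))) p1
     (uxx p1 p2 - t * (P2 (Om * (p1 * p1 + p2 * p2)) * (2 * Om * p1) * (2 * Om * p1) + P1 (Om * (p1 * p1 + p2 * p2)) * (2 * Om))) del Hdel) as [E1 E2].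
  - intros x Hx. assert (A := Hle x p2 Hx Hp2). lra.
  - intros x Hx. apply D_minus. apply Hux. apply D_scal.
    apply radial_d1 with a b; auto.
  - apply D_minus. apply Huxx. apply D_scal.
    apply radial_d2 with a b; auto. apply Hw; auto. unfold Rminus; rewrite Rplus_opp_r, Rabs_R0; auto.
  - split; lra.
Qed.

Lemma contact_y : forall (u uy uyy : R -> R -> R) (P P1 P2 : R -> R) a b Om t p1 p2 del,
  partial_y u uy -> partial_y uy uyy -> 0 < del ->
  (forall x y, Rabs (x - p1) < del -> Rabs (y - p2) < del -> a < Om * (x * x + y * y) < b) ->
  (forall w, a < w < b -> derivable_pt_lim P w (P1 w)) ->
  (forall w, a < w < b -> derivable_pt_lim P1 w (P2 w)) ->
  (forall x y, Rabs (x - p1) < del -> Rabs (y - p2) < del -> t * P (Om * (x * x + y * y)) <= u x y) ->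
  u p1 p2 = t * P (Om * (p1 * p1 + p2 * p2)) ->
  uy p1 p2 = t * (P1 (Om * (p1 * p1 + p2 * p2)) * (2 * Om * p2)) /\
  t * (P2 (Om * (p1 * p1 + p2 * p2)) * (2 * Om * p2) * (2 * Om * p2) + P1 (Om * (p1 * p1 + p2 * p2)) * (2 * Om)) <= uyy p1 p2.
Proof.
  intros u uy uyy P P1 P2 a b Om t p1 p2 del Huy Huyy Hdel Hw HP HP1 Hle Heq.
  assert (Hp1 : Rabs (p1 - p1) < del) by (unfold Rminus; rewrite Rplus_opp_r, Rabs_R0; auto).
  assert (Sw : forall s, p1 * p1 + s * s = s * s + p1 * p1) by (intros; ring).
  rewrite Sw in *.
  destruct (second_deriv_test (fun s => u p1 s - t * P (Om * (s * s + p1 * p1)))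
     (fun s => uy p1 s - t * (P1 (Om * (s * s + p1 * p1)) * (2 * Om * s))) p2
     (uyy p1 p2 - t * (P2 (Om * (p2 * p2 + p1 * p1)) * (2 * Om * p2) * (2 * Om * p2) + P1 (Om * (p2 * p2 + p1 * p1)) * (2 * Om))) del Hdel) as [E1 E2].
  - intros y Hy. assert (A := Hle p1 y Hp1 Hy). rewrite Sw in A. lra.
  - intros y Hy. apply D_minus. apply Huy. apply D_scal.
    apply radial_d1 with a b; auto. intros; rewrite <- Sw; apply Hw; auto.
  - apply D_minus. apply Huyy. apply D_scal.
    apply radial_d2 with a b; auto. rewrite <- Sw; apply Hw; auto. unfold Rminus; rewrite Rplus_opp_r, Rabs_R0; auto.
  - split; lra.
Qed.

Definition Lop Om lam th bv g0 g1 g2 p1 p2 :=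
  - (g2 * (2 * Om * p1) * (2 * Om * p1) + g1 * (2 * Om))
  - (g2 * (2 * Om * p2) * (2 * Om * p2) + g1 * (2 * Om))
  + 2 * lam * cos th * (g1 * (2 * Om * p1)) + 2 * lam * sin th * (g1 * (2 * Om * p2)) - bv * g0.

Lemma drift_bound : forall Om k lam th g1 p1 p2, 0 < Om -> 0 < k ->
  2 * lam * cos th * (g1 * (2 * Om * p1)) + 2 * lam * sin th * (g1 * (2 * Om * p2))
  <= Rabs g1 * (4 * (lam * lam) * k + Om * (Om * (p1 * p1 + p2 * p2)) / k).
Proof.
  intros Om k lam th g1 p1 p2 HO Hk.
  set (A := 2 * lam * cos th). set (B := 2 * lam * sin th).
  assert (HAB : A * A + B * B = 4 * (lam * lam)).
  { unfold A, B. pose proof (sin2_cos2 th). unfold Rsqr in H. nra. }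
  set (s := A * p1 + B * p2).
  assert (K1 : 2 * k * Om * s <= k * k * (A * A + B * B) + Om * Om * (p1 * p1 + p2 * p2)).
  { unfold s. pose proof (Rle_0_sqr (k * A - Om * p1)). pose proof (Rle_0_sqr (k * B - Om * p2)).
    unfold Rsqr in *. nra. }
  assert (K2 : - (2 * k * Om * s) <= k * k * (A * A + B * B) + Om * Om * (p1 * p1 + p2 * p2)).
  { unfold s. pose proof (Rle_0_sqr (k * A + Om * p1)). pose proof (Rle_0_sqr (k * B + Om * p2)).
    unfold Rsqr in *. nra. }
  replace (A * (g1 * (2 * Om * p1)) + B * (g1 * (2 * Om * p2))) with (2 * Om * g1 * s) by (unfold s; ring).
  rewrite HAB in K1, K2.
  assert (E : Rabs g1 * (4 * (lam * lam) * k + Om * (Om * (p1 * p1 + p2 * p2)) / k)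
            = Rabs g1 * ((k * k * (4 * (lam * lam)) + Om * Om * (p1 * p1 + p2 * p2)) / k)) by (field; lra).
  rewrite E.
  assert (B2 : 2 * Om * Rabs s <= (k * k * (4 * (lam * lam)) + Om * Om * (p1 * p1 + p2 * p2)) / k).
  { apply Rmult_le_reg_r with k; [lra|]. unfold Rdiv.
    replace ((k * k * (4 * (lam * lam)) + Om * Om * (p1 * p1 + p2 * p2)) * / k * k) with (k * k * (4 * (lam * lam)) + Om * Om * (p1 * p1 + p2 * p2)) by (field; lra).
    destruct (Rle_dec 0 s); [rewrite Rabs_right by lra| rewrite Rabs_left by lra]; nra. }
  assert (2 * Om * g1 * s <= Rabs g1 * (2 * Om * Rabs s)).
  { pose proof (Rle_abs (g1 * s)). rewrite Rabs_mult in H.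
    replace (2 * Om * g1 * s) with (2 * Om * (g1 * s)) by ring.
    replace (Rabs g1 * (2 * Om * Rabs s)) with (2 * Om * (Rabs g1 * Rabs s)) by ring.
    apply Rmult_le_compat_l; lra. }
  apply Rle_trans with (Rabs g1 * (2 * Om * Rabs s)); auto.
  apply Rmult_le_compat_l; auto. apply Rabs_pos.
Qed.

Lemma lap_id : forall Om g2 p1 p2, g2 * (2 * Om * p1) * (2 * Om * p1) + g2 * (2 * Om * p2) * (2 * Om * p2)
  = 4 * Om * g2 * (Om * (p1 * p1 + p2 * p2)).
Proof. intros; ring. Qed.

Section Pieces.
Variables (w0 Om lam th theta bv p1 p2 : R).
Hypothesis Hw0 : 0 < w0 <= / 8.
Hypothesis HOm : 0 < Om.
Hypothesis Hbig : 4 * (lam * lam) <= Om * w0.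
Hypothesis Hth : 0 < theta.
Hypothesis Hth2 : theta * (Lf w0 + 1) <= / 2.
Hypothesis Hbv : 0 <= bv.
Let w := Om * (p1 * p1 + p2 * p2).

Lemma w_nonneg : 0 <= w.
Proof. unfold w. nra. Qed.

Lemma piece_Q : w <= w0 -> bv * Lf w0 >= 8 * Om / w0 ->
  Lop Om lam th bv (Qf w0 w) (Qf1 w0 w) (Qf2 w0 w) p1 p2 <= - theta * Om * Qf w0 w.
Proof.
  intros Hw Hb. pose proof w_nonneg. pose proof (H_ge w0 Hw0).
  assert (D := drift_bound Om w0 lam th (Qf1 w0 w) p1 p2 HOm ltac:(lra)).
  fold w in D. unfold Lop. unfold Qf2, Qf1 in *.
  rewrite Rabs_Ropp, Rabs_right in D by (left; apply Rinv_0_lt_compat; lra).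
  set (q := Qf w0 w) in *.
  assert (Hq : Lf w0 <= q <= Lf w0 + 1).
  { unfold q, Qf. assert (0 <= w / w0 <= 1).
    { split. apply Rmult_le_pos; [lra|left; apply Rinv_0_lt_compat; lra].
      apply Rmult_le_reg_r with w0; [lra|]. unfold Rdiv; rewrite Rmult_assoc, Rinv_l by lra; lra. } lra. }
  assert (Iw : / w0 * (4 * (lam * lam) * w0 + Om * w / w0) <= 4 * (lam * lam) + Om / w0).
  { assert (Om * w / w0 <= Om). { apply Rmult_le_reg_r with w0; [lra|].
      unfold Rdiv; rewrite Rmult_assoc, Rinv_l by lra. nra. }
    assert (0 < / w0) by (apply Rinv_0_lt_compat; lra).
    replace (4 * (lam * lam) + Om / w0) with (/ w0 * (4 * (lam * lam) * w0 + Om)) by (field; lra).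
    apply Rmult_le_compat_l; lra. }
  assert (bv * q >= 8 * Om / w0) by nra.
  assert (theta * q <= theta * (Lf w0 + 1)) by (apply Rmult_le_compat_l; lra).
  assert (theta * Om * q <= Om / 2).
  { replace (theta * Om * q) with (Om * (theta * q)) by ring.
    apply Rle_trans with (Om * / 2). apply Rmult_le_compat_l; lra. lra. }
  assert (Om / w0 >= Om) by (apply Rle_ge; unfold Rdiv; apply Rmult_le_reg_r with w0; [lra|];
    rewrite Rmult_assoc, Rinv_l by lra; nra).
  assert (4 * (lam * lam) <= Om) by nra.
  replace (- (0 * (2 * Om * p1) * (2 * Om * p1) + - / w0 * (2 * Om)) - (0 * (2 * Om * p2) * (2 * Om * p2) + - / w0 * (2 * Om)))
    with (4 * (Om / w0)) by (field; lra).
  lra.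
Qed.

Lemma piece_L : w0 < w -> w <= / 4 ->
  Lop Om lam th bv (Lf w) (Lf1 w) (Lf2 w) p1 p2 <= - theta * Om * Lf w.
Proof.
  intros Hw1 Hw2. pose proof (H_ge w0 Hw0).
  assert (Hg : / 8 <= Lf w <= Lf w0).
  { split. rewrite <- Lf_quarter. apply Lf_decr; lra. apply Lf_decr; lra. }
  assert (D := drift_bound Om 1 lam th (Lf1 w) p1 p2 HOm ltac:(lra)).
  fold w in D. unfold Lop.
  assert (E : - (Lf2 w * (2 * Om * p1) * (2 * Om * p1) + Lf1 w * (2 * Om)) -
     (Lf2 w * (2 * Om * p2) * (2 * Om * p2) + Lf1 w * (2 * Om)) = - (2 * Om)).
  { replace (- (Lf2 w * (2 * Om * p1) * (2 * Om * p1) + Lf1 w * (2 * Om)) -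
     (Lf2 w * (2 * Om * p2) * (2 * Om * p2) + Lf1 w * (2 * Om))) with
     (- (Lf2 w * (2 * Om * p1) * (2 * Om * p1) + Lf2 w * (2 * Om * p2) * (2 * Om * p2)) - 4 * Om * Lf1 w) by ring.
    rewrite lap_id. fold w. unfold Lf1, Lf2. field. lra. }
  assert (Ha : Rabs (Lf1 w) <= / (2 * w)).
  { unfold Lf1. assert (/ (2 * w) >= 2) by (apply Rle_ge; apply Rmult_le_reg_r with (2 * w); [lra|];
      rewrite Rinv_l by lra; lra).
    rewrite Rabs_left by lra. lra. }
  assert (Dr : Rabs (Lf1 w) * (4 * (lam * lam) * 1 + Om * w / 1) <= / (2 * w) * (4 * (lam * lam)) + Om / 2).
  { apply Rle_trans with (/ (2 * w) * (4 * (lam * lam) * 1 + Om * w / 1)).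
    apply Rmult_le_compat_r; auto. nra. right; field; lra. }
  assert (/ (2 * w) * (4 * (lam * lam)) <= Om / 2).
  { apply Rmult_le_reg_r with (2 * w); [lra|]. replace (/ (2 * w) * (4 * (lam * lam)) * (2 * w)) with (4 * (lam * lam)) by (field; lra).
    nra. }
  assert (theta * Lf w <= theta * (Lf w0 + 1)) by (apply Rmult_le_compat_l; lra).
  assert (theta * Om * Lf w <= Om / 2).
  { replace (theta * Om * Lf w) with (Om * (theta * Lf w)) by ring.
    apply Rle_trans with (Om * / 2). apply Rmult_le_compat_l; lra. lra. }
  assert (0 <= bv * Lf w) by nra.
  lra.
Qed.

Lemma piece_O : / 4 <= w ->
  Lop Om lam th bv (Of w) (Of1 w) (Of2 w) p1 p2 <= - theta * Om * Of w.
Proof.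
  intros Hw. pose proof (H_ge w0 Hw0).
  assert (Hg : 0 < Of w) by (unfold Of; pose proof (exp_pos (2 - 8 * w)); lra).
  assert (D := drift_bound Om 1 lam th (Of1 w) p1 p2 HOm ltac:(lra)).
  fold w in D. unfold Lop.
  assert (Ab : Rabs (Of1 w) = 8 * Of w) by (unfold Of1; rewrite Rabs_left; lra).
  rewrite Ab in D.
  assert (E : - (Of2 w * (2 * Om * p1) * (2 * Om * p1) + Of1 w * (2 * Om)) -
     (Of2 w * (2 * Om * p2) * (2 * Om * p2) + Of1 w * (2 * Om)) = - 4 * Om * Of w * (64 * w - 8)).
  { replace (- (Of2 w * (2 * Om * p1) * (2 * Om * p1) + Of1 w * (2 * Om)) -
     (Of2 w * (2 * Om * p2) * (2 * Om * p2) + Of1 w * (2 * Om))) with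
     (- (Of2 w * (2 * Om * p1) * (2 * Om * p1) + Of2 w * (2 * Om * p2) * (2 * Om * p2)) - 4 * Om * Of1 w) by ring.
    rewrite lap_id. fold w. unfold Of1, Of2. ring. }
  assert (theta <= 1) by nra.
  assert (4 * (lam * lam) <= Om) by nra.
  assert (0 <= bv * Of w) by nra.
  replace (Om * w / 1) with (Om * w) in D by field.
  assert (Of w * (-4 * Om * (64 * w - 8) + 8 * (4 * (lam * lam) * 1 + Om * w) + theta * Om) <= 0).
  { assert (-4 * Om * (64 * w - 8) + 8 * (4 * (lam * lam) * 1 + Om * w) + theta * Om <= 0) by nra.
    nra. }
  nra.
Qed.

End Pieces.

Lemma sin_sq_le : forall x, sin x * sin x <= x * x.
Proof. intro x. pose proof (SIN_bound x). pose proof PI_RGT_0. pose proof PI2_1.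
  destruct (Rle_dec 1 (Rabs x)).
  - assert (1 <= x * x). { destruct (Rle_dec 0 x); [rewrite Rabs_right in r by lra|rewrite Rabs_left in r by lra]; nra. }
    nra.
  - destruct (Rtotal_order x 0) as [Hx|[Hx|Hx]].
    + rewrite Rabs_left in n by lra. pose proof (sin_gt_x x Hx).
      pose proof (sin_lt_0_var x ltac:(lra) Hx). nra.
    + subst; rewrite sin_0; lra.
    + rewrite Rabs_right in n by lra. pose proof (sin_lt_x x Hx).
      pose proof (sin_gt_0 x Hx ltac:(lra)). nra.
Qed.

Lemma cos_sq_ge : forall x, 1 - x * x <= cos x * cos x.
Proof. intro x. pose proof (sin_sq_le x). pose proof (sin2_cos2 x). unfold Rsqr in H0. lra. Qed.

Lemma xcos_le_sin : forall x, 0 <= x -> x <= PI / 2 -> x * cos x <= sin x.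
Proof. intros x H0 H1. destruct (Req_dec x 0) as [->|Hn]; [rewrite sin_0; lra|].
  destruct (MVT_cor2 (fun t => sin t - t * cos t) (fun t => t * sin t) 0 x) as [c [Hc Hcr]]; [lra| |].
  { intros c Hc. apply D_eq with (cos c - (1 * cos c + c * (- sin c))).
    apply D_minus. apply derivable_pt_lim_sin.
    apply (D_mult (fun t => t) cos). apply D_id. apply derivable_pt_lim_cos. ring. }
  rewrite sin_0, cos_0 in Hc.
  assert (0 <= sin c) by (apply sin_ge_0; pose proof PI_RGT_0; lra).
  assert (0 <= c * sin c * (x - 0)) by (apply Rmult_le_pos; [apply Rmult_le_pos|]; lra).
  lra.
Qed.

Lemma cos_sq_up : forall x, - (PI / 2) <= x <= PI / 2 -> cos x * cos x * (1 + x * x) <= 1.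
Proof. intros x [H1 H2].
  assert (A : Rabs (x * cos x) <= Rabs (sin x)).
  { destruct (Rle_dec 0 x).
    - assert (0 <= cos x) by (apply cos_ge_0; lra). assert (0 <= sin x) by (apply sin_ge_0; pose proof PI_RGT_0; lra).
      pose proof (xcos_le_sin x r H2). rewrite !Rabs_right; nra.
    - pose proof (xcos_le_sin (- x) ltac:(lra) ltac:(lra)). rewrite cos_neg, sin_neg in H.
      assert (0 <= cos x) by (apply cos_ge_0; lra).
      assert (sin x <= 0) by (pose proof (sin_ge_0 (- x) ltac:(lra) ltac:(pose proof PI_RGT_0; lra)); rewrite sin_neg in H3; lra).
      rewrite (Rabs_left1 (x * cos x)), (Rabs_left1 (sin x)) by nra. nra. }
  assert (B : (x * cos x) * (x * cos x) <= sin x * sin x).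
  { pose proof (Rabs_pos (x * cos x)). assert (Rabs (x * cos x) * Rabs (x * cos x) <= Rabs (sin x) * Rabs (sin x)) by nra.
    rewrite <- !Rabs_mult in H0. rewrite !Rabs_right in H0 by nra. auto. }
  pose proof (sin2_cos2 x). unfold Rsqr in H. nra.
Qed.

Lemma pow_ge_bern : forall h n, -1 <= h -> 1 + INR n * h <= (1 + h) ^ n.
Proof. intros h n Hh. induction n.
  - simpl; lra.
  - rewrite S_INR. simpl. assert (0 <= 1 + h) by lra.
    assert ((1 + INR n * h) * (1 + h) <= (1 + h) ^ n * (1 + h)) by (apply Rmult_le_compat_r; auto).
    pose proof (pos_INR n). nra.
Qed.

Definition E (L : R) (N : nat) (t : R) := (cos (PI * t / L) * cos (PI * t / L)) ^ N.

Lemma E_nonneg : forall L N t, 0 <= E L N t.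
Proof. intros. unfold E. apply pow_le. apply Rle_0_sqr. Qed.

Lemma E_periodic : forall L N t, 0 < L -> E L N (t + L) = E L N t.
Proof. intros. unfold E. replace (PI * (t + L) / L) with (PI * t / L + PI) by (field; lra).
  rewrite neg_cos. f_equal. ring. Qed.

Lemma E_lower : forall L N t, 0 < L -> (1 <= N)%nat -> INR N * ((PI * t / L) * (PI * t / L)) <= / 2 ->
  / 2 <= E L N t.
Proof. intros L N t HL HN H. unfold E. set (x := PI * t / L) in *.
  assert (HN' : 1 <= INR N) by (apply (le_INR 1); auto).
  assert (x * x <= / 2) by (pose proof (Rle_0_sqr x); unfold Rsqr in *; nra).
  assert (A : (1 + - (x * x)) ^ N <= (cos x * cos x) ^ N).
  { apply pow_incr. pose proof (cos_sq_ge x). split; lra. }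
  pose proof (pow_ge_bern (- (x * x)) N ltac:(lra)). lra.
Qed.

Lemma E_upper_pt : forall N x, - (PI / 2) <= x <= PI / 2 ->
  (cos x * cos x) ^ N <= / (1 + INR N * (x * x)).
Proof. intros N x Hx.
  assert (C := cos_sq_up x Hx).
  assert (P : 0 < 1 + x * x) by (pose proof (Rle_0_sqr x); unfold Rsqr in *; lra).
  assert (C2 : cos x * cos x <= / (1 + x * x)).
  { apply Rmult_le_reg_r with (1 + x * x); auto. rewrite Rinv_l; lra. }
  assert (C3 : (cos x * cos x) ^ N <= (/ (1 + x * x)) ^ N).
  { apply pow_incr. split; auto. apply Rle_0_sqr. }
  rewrite pow_inv in C3.
  assert (B := pow_ge_bern (x * x) N ltac:(pose proof (Rle_0_sqr x); unfold Rsqr in *; lra)).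
  assert (P2 : 0 < 1 + INR N * (x * x)) by (pose proof (pos_INR N); pose proof (Rle_0_sqr x); unfold Rsqr in *; nra).
  apply Rle_trans with (/ (1 + x * x) ^ N); auto.
  apply Rinv_le_contravar; auto.
Qed.

Definition Ed (L : R) (N : nat) (t : R) :=
  INR N * (cos (PI * t / L) * cos (PI * t / L)) ^ pred N *
  ((- sin (PI * t / L) * (PI / L)) * cos (PI * t / L) + cos (PI * t / L) * (- sin (PI * t / L) * (PI / L))).

Lemma D_E : forall L N t, derivable_pt_lim (E L N) t (Ed L N t).
Proof. intros. unfold E, Ed.
  apply D_eq with (INR N * (cos (PI * t / L) * cos (PI * t / L)) ^ pred N *
    ((- sin (PI * t / L) * (PI / L)) * cos (PI * t / L) + cos (PI * t / L) * (- sin (PI * t / L) * (PI / L)))); [|ring].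
  apply (D_comp (fun y => y ^ N) (fun t => cos (PI * t / L) * cos (PI * t / L))).
  - apply (D_mult (fun t => cos (PI * t / L)) (fun t => cos (PI * t / L)));
    (apply D_eq with (- sin (PI * t / L) * (PI / L)); [| ring]);
    (apply (D_comp cos (fun t => PI * t / L)); [| apply derivable_pt_lim_cos]);
    (apply derivable_pt_lim_ext with (fun t => (PI / L) * t); [intro; unfold Rdiv; ring|]);
    (apply D_eq with (PI / L * 1); [apply D_scal, D_id|ring]).
  - apply derivable_pt_lim_pow.
Qed.

Lemma E_cont : forall L N t, continuity_pt (E L N) t.
Proof. intros. eapply lim_cont. apply D_E. Qed.

Lemma Ed_cont : forall L N t, continuity_pt (Ed L N) t.
Proof. intros. unfold Ed. reg. Qed.

Lemma E_int : forall L N, 0 <= L -> Riemann_integrable (E L N) 0 L.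
Proof. intros. apply continuity_implies_RiemannInt; auto. intros; apply E_cont. Qed.

Lemma RiemannInt_ge_pos : forall f a b (pr : Riemann_integrable f a b), a <= b ->
  (forall x, a < x < b -> 0 <= f x) -> 0 <= RiemannInt pr.
Proof. intros.
  assert (Z : Riemann_integrable (fct_cte 0) a b) by apply RiemannInt_P14.
  assert (RiemannInt Z <= RiemannInt pr) by (apply RiemannInt_P19; auto; intros; unfold fct_cte; auto).
  rewrite RiemannInt_P15 in H1. lra. Qed.

Lemma div_le_c : forall a c L, 0 < L -> a <= c * L -> a / L <= c.
Proof. intros. apply Rmult_le_reg_r with L; auto. replace (a / L * L) with a by (field; lra). lra. Qed.
Lemma c_le_div : forall a c L, 0 < L -> c * L <= a -> c <= a / L.
Proof. intros. apply Rmult_le_reg_r with L; auto. replace (a / L * L) with a by (field; lra). lra. Qed.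

Lemma E_int_upper : forall L N (HL : 0 <= L), 0 < L -> (1 <= N)%nat ->
  RiemannInt (E_int L N HL) <= L / sqrt (INR N).
Proof.
  intros L N HL HL' HN.
  assert (HN' : 1 <= INR N) by (apply (le_INR 1); auto).
  set (s := sqrt (INR N)).
  assert (Hs : 0 < s) by (apply sqrt_lt_R0; lra).
  assert (Hs2 : s * s = INR N) by (apply sqrt_sqrt; lra).
  set (a := s * PI / L).
  assert (Ha : 0 < a) by (unfold a; apply Rdiv_lt_0_compat; [apply Rmult_lt_0_compat; [lra|apply PI_RGT_0]|lra]).
  set (F := fun x => / a * (atan (a * x) + atan (a * (x - L)))).
  set (gup := fun x => / (1 + (a * x) ^ 2) + / (1 + (a * (x - L)) ^ 2)).
  assert (DF : forall x, derivable_pt_lim F x (gup x)).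
  { intro x. unfold F, gup.
    apply D_eq with (/ a * (/ (1 + (a * x) ^ 2) * (a * 1) + / (1 + (a * (x - L)) ^ 2) * (a * (1 - 0)))).
    apply D_scal. apply D_plus.
    - apply (D_comp atan (fun x => a * x)). apply D_scal, D_id. apply derivable_pt_lim_atan.
    - apply (D_comp atan (fun x => a * (x - L))). apply D_scal, D_minus. apply D_id. apply D_const.
      apply derivable_pt_lim_atan.
    - field. split; [|split]; try lra; apply Rgt_not_eq; apply plus_Rsqr_gt_0. }
  set (dF := fun x => exist (fun l => derivable_pt_abs F x l) (gup x) (DF x) : derivable_pt F x).
  assert (Cg : continuity (derive F dF)).
  { intro x. unfold derive, derive_pt, dF; simpl. unfold gup. reg.
    apply Rgt_not_eq; apply plus_Rsqr_gt_0. apply Rgt_not_eq; apply plus_Rsqr_gt_0. }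
  set (FC := @mkC1 F dF Cg).
  assert (pr : Riemann_integrable (derive FC (diff0 FC)) 0 L) by apply RiemannInt_P32.
  assert (Ev : RiemannInt pr = F L - F 0) by (apply (RiemannInt_P33 FC (a:=0) (b:=L) pr); lra).
  assert (Le : RiemannInt (E_int L N HL) <= RiemannInt pr).
  { apply RiemannInt_P19; auto. intros x Hx.
    change (derive FC (diff0 FC) x) with (gup x). unfold gup, E.
    assert (P1 : 0 < / (1 + (a * x) ^ 2)) by (apply Rinv_0_lt_compat, plus_Rsqr_gt_0).
    assert (P2 : 0 < / (1 + (a * (x - L)) ^ 2)) by (apply Rinv_0_lt_compat, plus_Rsqr_gt_0).
    pose proof PI_RGT_0.
    destruct (Rle_dec x (L / 2)).
    - assert (B := E_upper_pt N (PI * x / L)).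
      assert ((a * x) ^ 2 = INR N * (PI * x / L * (PI * x / L))) by (unfold a; rewrite <- Hs2; field; lra).
      rewrite H0. assert (0 <= PI * x / L) by (apply Rmult_le_pos; [nra|left; apply Rinv_0_lt_compat; lra]).
      assert (PI * x / L <= PI / 2).
      { apply div_le_c; auto. nra. }
      specialize (B ltac:(lra)). lra.
    - assert (B := E_upper_pt N (PI * x / L - PI)).
      assert ((a * (x - L)) ^ 2 = INR N * ((PI * x / L - PI) * (PI * x / L - PI))) by (unfold a; rewrite <- Hs2; field; lra).
      rewrite H0.
      assert (PI * x / L - PI <= 0).
      { assert (PI * x / L <= PI). { apply div_le_c; auto. nra. } lra. }
      assert (- (PI / 2) <= PI * x / L - PI).
      { assert (PI / 2 <= PI * x / L). { apply c_le_div; auto. nra. } lra. }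
      specialize (B ltac:(lra)).
      replace (cos (PI * x / L)) with (- cos (PI * x / L - PI)).
      replace (- cos (PI * x / L - PI) * - cos (PI * x / L - PI)) with (cos (PI * x / L - PI) * cos (PI * x / L - PI)) by ring.
      lra.
      rewrite <- neg_cos. f_equal. ring. }
  assert (FL : F L - F 0 = / a * (2 * atan (a * L))).
  { unfold F. replace (a * (L - L)) with 0 by ring. replace (a * 0) with 0 by ring.
    replace (a * (0 - L)) with (- (a * L)) by ring. rewrite atan_opp, atan_0. ring. }
  destruct (atan_bound (a * L)) as [_ Hb].
  assert (/ a * (2 * atan (a * L)) < / a * PI).
  { apply Rmult_lt_compat_l. apply Rinv_0_lt_compat; auto. lra. }
  assert (/ a * PI = L / s) by (unfold a; field; split; [lra|split; [lra|apply Rgt_not_eq, PI_RGT_0]]).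
  fold s. lra.
Qed.

Lemma E_int_pos : forall L N (HL : 0 <= L), 0 < L -> (1 <= N)%nat -> 0 < RiemannInt (E_int L N HL).
Proof.
  intros L N HL HL' HN.
  assert (HN' : 1 <= INR N) by (apply (le_INR 1); auto).
  pose proof PI_RGT_0.
  set (d := L / (2 * PI * INR N)).
  assert (Hd : 0 < d) by (unfold d; apply Rdiv_lt_0_compat; [lra|apply Rmult_lt_0_compat; lra]).
  assert (HdL : d <= L).
  { unfold d. pose proof PI2_1. apply div_le_c. apply Rmult_lt_0_compat; lra.
    assert (1 <= 2 * PI * INR N) by nra. nra. }
  assert (pr1 : Riemann_integrable (E L N) 0 d) by (apply continuity_implies_RiemannInt; [lra|intros; apply E_cont]).
  assert (pr2 : Riemann_integrable (E L N) d L) by (apply continuity_implies_RiemannInt; [lra|intros; apply E_cont]).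
  rewrite <- (RiemannInt_P26 pr1 pr2).
  assert (A : / 2 * (d - 0) <= RiemannInt pr1).
  { apply (RiemannInt_const_bound (l := / 2) (u := / 2 + 1) pr1); [lra|]. intros x Hx. split.
    - apply E_lower; auto.
      assert (PI * x / L <= / (2 * INR N)).
      { apply Rmult_le_reg_r with L; auto. unfold Rdiv. rewrite Rmult_assoc, Rinv_l by lra.
        assert (x <= L / (2 * PI * INR N)) by (unfold d in Hx; lra).
        replace (/ (2 * INR N) * L) with (PI * (L / (2 * PI * INR N))) by (field; lra). nra. }
      assert (0 <= PI * x / L) by (apply Rmult_le_pos; [nra|left; apply Rinv_0_lt_compat; lra]).
      assert (/ (2 * INR N) * (2 * INR N) = 1) by (field; lra).
      assert (INR N * (/ (2 * INR N) * / (2 * INR N)) <= / 2).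
      { replace (INR N * (/ (2 * INR N) * / (2 * INR N))) with (/ 4 * / INR N) by (field; lra).
        assert (/ INR N <= 1). { rewrite <- Rinv_1. apply Rinv_le_contravar; lra. } lra. }
      assert (PI * x / L * (PI * x / L) <= / (2 * INR N) * / (2 * INR N)) by nra.
      nra.
    - unfold E. assert (cos (PI * x / L) * cos (PI * x / L) <= 1).
      { pose proof (sin2_cos2 (PI * x / L)). unfold Rsqr in H0. nra. }
      assert ((cos (PI * x / L) * cos (PI * x / L)) ^ N <= 1 ^ N).
      { apply pow_incr. split; [apply Rle_0_sqr|auto]. }
      rewrite pow1 in H1. lra. }
  assert (B : 0 <= RiemannInt pr2) by (apply RiemannInt_ge_pos; auto; intros; apply E_nonneg).
  lra.
Qed.

Lemma RInt_scal : forall f a b k (pr : Riemann_integrable f a b)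
  (pr2 : Riemann_integrable (fun x => k * f x) a b), a <= b -> RiemannInt pr2 = k * RiemannInt pr.
Proof. intros f a b k pr pr2 Hab.
  pose proof (RiemannInt_P10 k (RiemannInt_P14 a b 0) pr) as pr3.
  rewrite (RiemannInt_P18 pr2 pr3 Hab) by (intros; unfold fct_cte; ring).
  rewrite (RiemannInt_P13 (RiemannInt_P14 a b 0) pr pr3), RiemannInt_P15. ring. Qed.

Definition Iint L N (HL : 0 <= L) := RiemannInt (E_int L N HL).
Definition Bc L1 L2 alpha N H1 H2 := alpha * L1 * L2 / (Iint L1 N H1 * Iint L2 N H2).
Definition bfun L1 L2 alpha N H1 H2 (x y : R) := Bc L1 L2 alpha N H1 H2 * E L1 N x * E L2 N y.

Lemma b_in_Lambda : forall L1 L2 alpha N (H1 : 0 <= L1) (H2 : 0 <= L2), 0 < L1 -> 0 < L2 -> (1 <= N)%nat ->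
  0 <= alpha -> in_Lambda L1 L2 alpha (bfun L1 L2 alpha N H1 H2).
Proof.
  intros L1 L2 alpha N H1 H2 HL1 HL2 HN Ha.
  set (B := Bc L1 L2 alpha N H1 H2).
  assert (I1p := E_int_pos L1 N H1 HL1 HN). assert (I2p := E_int_pos L2 N H2 HL2 HN).
  assert (HB : 0 <= B).
  { unfold B, Bc, Iint. apply Rmult_le_pos. apply Rmult_le_pos; [apply Rmult_le_pos|]; lra.
    left; apply Rinv_0_lt_compat, Rmult_lt_0_compat; auto. }
  unfold in_Lambda. split; [|split; [|split]].
  - unfold C1_2. split.
    + unfold bfun. apply cont2_mult. apply cont2_mult. apply cont2_const.
      apply cont2_fst; intro; apply E_cont. apply cont2_snd; intro; apply E_cont.
    + exists (fun x y => B * Ed L1 N x * E L2 N y), (fun x y => B * E L1 N x * Ed L2 N y).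
      split; [|split; [|split]].
      * intros x y. unfold bfun. fold B. apply (derivable_pt_lim_scal_right (fun t => B * E L1 N t)).
        apply D_scal, D_E.
      * intros x y. unfold bfun. fold B. apply D_scal, D_E.
      * apply cont2_mult. apply cont2_mult. apply cont2_const.
        apply cont2_fst; intro; apply Ed_cont. apply cont2_snd; intro; apply E_cont.
      * apply cont2_mult. apply cont2_mult. apply cont2_const.
        apply cont2_fst; intro; apply E_cont. apply cont2_snd; intro; apply Ed_cont.
  - intros x y. unfold bfun. fold B. pose proof (E_nonneg L1 N x). pose proof (E_nonneg L2 N y).
    apply Rmult_le_pos; [apply Rmult_le_pos|]; auto.
  - intros x y. unfold bfun. rewrite !E_periodic; auto.
  - exists (fun x => (B * Iint L2 N H2) * E L1 N x). split.
    + intro x. exists (Riemann_integrable_scal (B * E L1 N x) (E_int L2 N H2)).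
      transitivity ((B * E L1 N x) * RiemannInt (E_int L2 N H2)); [apply RInt_scal; lra|]. unfold Iint. ring.
    + exists (Riemann_integrable_scal (B * Iint L2 N H2) (E_int L1 N H1)).
      transitivity ((B * Iint L2 N H2) * RiemannInt (E_int L1 N H1)); [apply RInt_scal; lra|].
      unfold B, Bc, Iint. field. split; lra.
Qed.

Lemma Bc_lower : forall L1 L2 alpha N (H1 : 0 <= L1) (H2 : 0 <= L2), 0 < L1 -> 0 < L2 -> (1 <= N)%nat ->
  0 < alpha -> alpha * INR N <= Bc L1 L2 alpha N H1 H2.
Proof.
  intros L1 L2 alpha N H1 H2 HL1 HL2 HN Ha.
  assert (HN' : 1 <= INR N) by (apply (le_INR 1); auto).
  assert (I1p := E_int_pos L1 N H1 HL1 HN). assert (I2p := E_int_pos L2 N H2 HL2 HN).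
  assert (U1 := E_int_upper L1 N H1 HL1 HN). assert (U2 := E_int_upper L2 N H2 HL2 HN).
  set (s := sqrt (INR N)) in *.
  assert (Hs : 0 < s) by (apply sqrt_lt_R0; lra).
  assert (Hs2 : s * s = INR N) by (apply sqrt_sqrt; lra).
  unfold Bc, Iint in *.
  set (I1 := RiemannInt (E_int L1 N H1)) in *. set (I2 := RiemannInt (E_int L2 N H2)) in *.
  assert (P : I1 * I2 <= L1 * L2 / INR N).
  { rewrite <- Hs2. replace (L1 * L2 / (s * s)) with ((L1 / s) * (L2 / s)) by (field; lra).
    apply Rmult_le_compat; lra. }
  apply c_le_div. apply Rmult_lt_0_compat; auto.
  apply Rle_trans with (alpha * INR N * (L1 * L2 / INR N)).
  apply Rmult_le_compat_l; [nra|auto].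
  right; field; lra.
Qed.

Lemma shift_x_nat : forall (u : R -> R -> R) L1 L2, periodic2 L1 L2 u ->
  forall n x y, u (x - INR n * L1) y = u x y /\ u (x + INR n * L1) y = u x y.
Proof. intros u L1 L2 Hp n. induction n; intros x y.
  - simpl. replace (x - 0 * L1) with x by ring. replace (x + 0 * L1) with x by ring. auto.
  - rewrite S_INR. split.
    + rewrite <- (proj1 (Hp (x - (INR n + 1) * L1) y)). replace (x - (INR n + 1) * L1 + L1) with (x - INR n * L1) by ring.
      apply IHn.
    + replace (x + (INR n + 1) * L1) with ((x + INR n * L1) + L1) by ring. rewrite (proj1 (Hp _ y)). apply IHn.
Qed.

Lemma shift_y_nat : forall (u : R -> R -> R) L1 L2, periodic2 L1 L2 u ->
  forall n x y, u x (y - INR n * L2) = u x y /\ u x (y + INR n * L2) = u x y.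
Proof. intros u L1 L2 Hp n. induction n; intros x y.
  - simpl. replace (y - 0 * L2) with y by ring. replace (y + 0 * L2) with y by ring. auto.
  - rewrite S_INR. split.
    + rewrite <- (proj2 (Hp x (y - (INR n + 1) * L2))). replace (y - (INR n + 1) * L2 + L2) with (y - INR n * L2) by ring.
      apply IHn.
    + replace (y + (INR n + 1) * L2) with ((y + INR n * L2) + L2) by ring. rewrite (proj2 (Hp x _)). apply IHn.
Qed.

Lemma IZR_nat_or_neg : forall k : Z, exists n : nat, IZR k = INR n \/ IZR k = - INR n.
Proof. intro k. destruct (Z_le_gt_dec 0 k).
  - exists (Z.to_nat k). left. rewrite INR_IZR_INZ, Z2Nat.id; auto.
  - exists (Z.to_nat (- k)). right. rewrite INR_IZR_INZ, Z2Nat.id by lia. rewrite opp_IZR. ring.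
Qed.

Lemma shift_x : forall (u : R -> R -> R) L1 L2, periodic2 L1 L2 u ->
  forall (k : Z) x y, u (x - IZR k * L1) y = u x y.
Proof. intros. destruct (IZR_nat_or_neg k) as [n [E|E]]; rewrite E.
  - apply (shift_x_nat u L1 L2 H n).
  - replace (x - - INR n * L1) with (x + INR n * L1) by ring. apply (shift_x_nat u L1 L2 H n). Qed.

Lemma shift_y : forall (u : R -> R -> R) L1 L2, periodic2 L1 L2 u ->
  forall (k : Z) x y, u x (y - IZR k * L2) = u x y.
Proof. intros. destruct (IZR_nat_or_neg k) as [n [E|E]]; rewrite E.
  - apply (shift_y_nat u L1 L2 H n).
  - replace (y - - INR n * L2) with (y + INR n * L2) by ring. apply (shift_y_nat u L1 L2 H n). Qed.

Lemma reduce : forall L x, 0 < L -> exists k : Z,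
  - (L / 2) <= x - IZR k * L <= L / 2 /\ (x - IZR k * L) * (x - IZR k * L) <= x * x.
Proof.
  intros L x HL. destruct (archimed (x / L + / 2)) as [A1 A2].
  exists (up (x / L + / 2) - 1)%Z. rewrite minus_IZR.
  set (m := IZR (up (x / L + / 2))) in *.
  assert (B1 : x / L - (m - 1) >= - / 2) by lra.
  assert (B2 : x / L - (m - 1) < / 2) by lra.
  assert (E : x - (m - 1) * L = L * (x / L - (m - 1))) by (field; lra).
  assert (C : - (L / 2) <= x - (m - 1) * L <= L / 2).
  { rewrite E. split; nra. }
  split; auto.
  assert (Hk : (up (x / L + / 2) - 1 = 0)%Z \/ (1 <= up (x / L + / 2) - 1)%Z \/ (up (x / L + / 2) - 1 <= -1)%Z) by lia.
  destruct Hk as [K|[K|K]].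
  - apply (f_equal IZR) in K. rewrite minus_IZR in K. fold m in K. replace (m - 1) with 0 by (simpl in K; lra). nra.
  - apply IZR_le in K. rewrite minus_IZR in K. fold m in K.
    assert (x / L >= / 2) by lra.
    assert (x >= L / 2). { replace x with (L * (x / L)) by (field; lra). nra. }
    nra.
  - apply IZR_le in K. rewrite minus_IZR in K. fold m in K.
    assert (x / L <= - / 2) by lra.
    assert (x <= - (L / 2)). { replace x with (L * (x / L)) by (field; lra). nra. }
    nra.
Qed.

Lemma global_min : forall (u : R -> R -> R) L1 L2 w0 Om p1 p2, 0 < L1 -> 0 < L2 -> 0 < w0 <= / 8 -> 0 <= Om ->
  periodic2 L1 L2 u -> (forall x y, 0 < u x y) ->
  (forall x y, - (L1 / 2) <= x <= L1 / 2 -> - (L2 / 2) <= y <= L2 / 2 ->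
     u p1 p2 / Phi w0 (Om * (p1 * p1 + p2 * p2)) <= u x y / Phi w0 (Om * (x * x + y * y))) ->
  forall x y, u p1 p2 / Phi w0 (Om * (p1 * p1 + p2 * p2)) <= u x y / Phi w0 (Om * (x * x + y * y)).
Proof.
  intros u L1 L2 w0 Om p1 p2 H1 H2 Hw0 HOm Hp Hu Hmin x y.
  destruct (reduce L1 x H1) as [k [Kx Sx]].
  destruct (reduce L2 y H2) as [j [Ky Sy]].
  specialize (Hmin _ _ Kx Ky).
  rewrite shift_y with (L1 := L1), shift_x with (L2 := L2) in Hmin by auto.
  eapply Rle_trans; [apply Hmin|].
  assert (D : Phi w0 (Om * (x * x + y * y)) <= Phi w0 (Om * ((x - IZR k * L1) * (x - IZR k * L1) + (y - IZR j * L2) * (y - IZR j * L2)))).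
  { apply Phi_decr; auto. apply Rmult_le_compat_l; lra. }
  pose proof (Phi_pos w0 Hw0 (Om * (x * x + y * y))).
  pose proof (Phi_pos w0 Hw0 (Om * ((x - IZR k * L1) * (x - IZR k * L1) + (y - IZR j * L2) * (y - IZR j * L2)))).
  pose proof (Hu x y).
  unfold Rdiv. apply Rmult_le_compat_l; [lra|]. apply Rinv_le_contravar; auto.
Qed.

Lemma cont2_W : forall Om, cont2 (fun x y => Om * (x * x + y * y)).
Proof. intro Om. apply cont2_scal. apply cont2_plus; apply cont2_mult; try apply cont2_x; apply cont2_y. Qed.

Lemma finish : forall (u ux uy uxx uyy : R -> R -> R) (Ph P P1 P2 : R -> R) a b Om lam th bv mu t theta p1 p2,
  partial_x u ux -> partial_y u uy -> partial_x ux uxx -> partial_y uy uyy ->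
  0 < t -> 0 < Om ->
  a < Om * (p1 * p1 + p2 * p2) < b ->
  (forall w, a < w < b -> P w <= Ph w) ->
  (forall w, a < w < b -> derivable_pt_lim P w (P1 w)) ->
  (forall w, a < w < b -> derivable_pt_lim P1 w (P2 w)) ->
  (forall x y, t * Ph (Om * (x * x + y * y)) <= u x y) ->
  u p1 p2 = t * P (Om * (p1 * p1 + p2 * p2)) ->
  0 < P (Om * (p1 * p1 + p2 * p2)) ->
  - uxx p1 p2 - uyy p1 p2 + 2 * lam * cos th * ux p1 p2 + 2 * lam * sin th * uy p1 p2 - bv * u p1 p2 = mu * u p1 p2 ->
  Lop Om lam th bv (P (Om * (p1 * p1 + p2 * p2))) (P1 (Om * (p1 * p1 + p2 * p2))) (P2 (Om * (p1 * p1 + p2 * p2))) p1 p2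
    <= - theta * Om * P (Om * (p1 * p1 + p2 * p2)) ->
  mu <= - theta * Om.
Proof.
  intros u ux uy uxx uyy Ph P P1 P2 a b Om lam th bv mu t theta p1 p2 Hux Huy Huxx Huyy Ht HOm Hab HPle HD1 HD2 Hge Hp Hpos Heq HL.
  set (wp := Om * (p1 * p1 + p2 * p2)) in *.
  destruct (cont2_W Om p1 p2 (Rmin (wp - a) (b - wp))) as [del [Hdel Hc]].
  { apply Rmin_pos; lra. }
  assert (Hw : forall x y, Rabs (x - p1) < del -> Rabs (y - p2) < del -> a < Om * (x * x + y * y) < b).
  { intros x y Hx Hy. specialize (Hc x y Hx Hy). apply Rabs_def2 in Hc.
    pose proof (Rmin_l (wp - a) (b - wp)). pose proof (Rmin_r (wp - a) (b - wp)). fold wp in Hc. lra. }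
  assert (Hle : forall x y, Rabs (x - p1) < del -> Rabs (y - p2) < del -> t * P (Om * (x * x + y * y)) <= u x y).
  { intros x y Hx Hy. apply Rle_trans with (t * Ph (Om * (x * x + y * y))); auto.
    apply Rmult_le_compat_l; [lra|]. apply HPle. apply Hw; auto. }
  destruct (contact_x u ux uxx P P1 P2 a b Om t p1 p2 del Hux Huxx Hdel Hw HD1 HD2 Hle Hp) as [X1 X2].
  destruct (contact_y u uy uyy P P1 P2 a b Om t p1 p2 del Huy Huyy Hdel Hw HD1 HD2 Hle Hp) as [Y1 Y2].
  fold wp in X1, X2, Y1, Y2.
  unfold Lop in HL.
  rewrite X1, Y1, Hp in Heq.
  assert (mu * (t * P wp) <= t * (- theta * Om * P wp)).
  { rewrite <- Heq. apply Rle_trans with (t * (- (P2 wp * (2 * Om * p1) * (2 * Om * p1) + P1 wp * (2 * Om)) -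
   (P2 wp * (2 * Om * p2) * (2 * Om * p2) + P1 wp * (2 * Om)) + 2 * lam * cos th * (P1 wp * (2 * Om * p1)) +
   2 * lam * sin th * (P1 wp * (2 * Om * p2)) - bv * P wp)).
    - nra.
    - apply Rmult_le_compat_l; lra. }
  assert (0 < t * P wp) by (apply Rmult_lt_0_compat; auto).
  replace (t * (- theta * Om * P wp)) with ((- theta * Om) * (t * P wp)) in H by ring.
  apply Rmult_le_reg_r in H; auto.
Qed.

Lemma mu_bound : forall L1 L2 lam th (b : R -> R -> R) mu w0 Om theta,
  0 < L1 -> 0 < L2 -> 0 < w0 <= / 8 -> 0 < Om -> 4 * (lam * lam) <= Om * w0 -> 0 < theta ->
  theta * (Lf w0 + 1) <= / 2 ->
  (forall x y, 0 <= b x y) ->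
  (forall x y, - (L1 / 2) <= x <= L1 / 2 -> - (L2 / 2) <= y <= L2 / 2 -> Om * (x * x + y * y) <= w0 ->
     b x y * Lf w0 >= 8 * Om / w0) ->
  is_principal_eig L1 L2 lam th b mu -> mu <= - theta * Om.
Proof.
  intros L1 L2 lam th b mu w0 Om theta HL1 HL2 Hw0 HOm Hbig Hth Hth2 Hb Hcore Heig.
  destruct Heig as [u [ux [uy [uxx [uxy [uyx [uyy [Hux [Huy [Huxx [Huxy [Huyx [Huyy
    [Cu [Cux [Cuy [Cuxx [Cuxy [Cuyx [Cuyy [Hper [Hpos Heq]]]]]]]]]]]]]]]]]]]]]].
  set (F := fun x y => u x y * / Phi w0 (Om * (x * x + y * y))).
  assert (CF : cont2 F).
  { unfold F. apply cont2_mult; auto. apply cont2_inv.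
    apply (cont2_comp_all (Phi w0) (fun x y => Om * (x * x + y * y))). apply cont2_W.
    intro; apply Phi_cont; auto.
    intros; apply Rgt_not_eq, Phi_pos; auto. }
  destruct (evt2 F (- (L1 / 2)) (L1 / 2) (- (L2 / 2)) (L2 / 2) CF ltac:(lra) ltac:(lra)) as [p1 [p2 [Hp1 [Hp2 Hmin]]]].
  assert (G := global_min u L1 L2 w0 Om p1 p2 HL1 HL2 Hw0 ltac:(lra) Hper Hpos Hmin).
  set (t := F p1 p2).
  assert (Ht : 0 < t).
  { unfold t, F. apply Rmult_lt_0_compat; auto. apply Rinv_0_lt_compat, Phi_pos; auto. }
  assert (Hge : forall x y, t * Phi w0 (Om * (x * x + y * y)) <= u x y).
  { intros x y. specialize (G x y). unfold Rdiv in G.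
    pose proof (Phi_pos w0 Hw0 (Om * (x * x + y * y))).
    apply Rmult_le_reg_r with (/ Phi w0 (Om * (x * x + y * y))). apply Rinv_0_lt_compat; auto.
    rewrite Rmult_assoc, Rinv_r, Rmult_1_r by lra. unfold t, F. lra. }
  assert (Hpv : u p1 p2 = t * Phi w0 (Om * (p1 * p1 + p2 * p2))).
  { unfold t, F. pose proof (Phi_pos w0 Hw0 (Om * (p1 * p1 + p2 * p2))). field. lra. }
  set (wp := Om * (p1 * p1 + p2 * p2)) in *.
  assert (Hwp : 0 <= wp) by (unfold wp; nra).
  pose proof (H_ge w0 Hw0) as HH.
  specialize (Heq p1 p2).
  destruct (Rle_dec wp w0) as [C1|C1]; [|destruct (Rle_dec wp (/4)) as [C2|C2]].
  -
    apply (finish u ux uy uxx uyy (Phi w0) (Qf w0) (Qf1 w0) (Qf2 w0) (-1) (/4) Om lam th (b p1 p2) mu t theta p1 p2); auto.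
    + fold wp; lra.
    + intros w Hw. unfold Phi. destruct (Rle_dec w w0); [lra|]. destruct (Rle_dec w (/4)); [|lra].
      apply Lf_ge_Qf; lra.
    + intros; apply D_Qf; lra.
    + intros; apply D_Qf1.
    + fold wp. rewrite Hpv. unfold Phi. destruct (Rle_dec wp w0); [auto|lra].
    + fold wp. pose proof (Phi_pos w0 Hw0 wp). unfold Phi in H. destruct (Rle_dec wp w0); [auto|lra].
    + fold wp. apply piece_Q; auto; apply Hcore; auto.
  - apply (finish u ux uy uxx uyy (Phi w0) Lf Lf1 Lf2 w0 (/3) Om lam th (b p1 p2) mu t theta p1 p2); auto.
    + fold wp; lra.
    + intros w Hw. unfold Phi. destruct (Rle_dec w w0); [lra|]. destruct (Rle_dec w (/4)); [lra|].
      apply Lf_le_Of; lra.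
    + intros; apply D_Lf; lra.
    + intros; apply D_Lf1; lra.
    + fold wp. rewrite Hpv. unfold Phi. destruct (Rle_dec wp w0); [lra|]. destruct (Rle_dec wp (/4)); [auto|lra].
    + fold wp. assert (Lf (/4) <= Lf wp) by (apply Lf_decr; lra). rewrite Lf_quarter in H. lra.
    + fold wp. apply (piece_L w0); auto; fold wp; lra.
  - apply (finish u ux uy uxx uyy (Phi w0) Of Of1 Of2 (/4) (wp + 1) Om lam th (b p1 p2) mu t theta p1 p2); auto.
    + fold wp; lra.
    + intros w Hw. unfold Phi. destruct (Rle_dec w w0); [lra|]. destruct (Rle_dec w (/4)); [lra|]. lra.
    + intros; apply D_Of.
    + intros; apply D_Of1.
    + fold wp. rewrite Hpv. unfold Phi. destruct (Rle_dec wp w0); [lra|]. destruct (Rle_dec wp (/4)); [lra|auto].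
    + fold wp. unfold Of. pose proof (exp_pos (2 - 8 * wp)). lra.
    + fold wp. apply (piece_O w0); auto; fold wp; lra.
Qed.

Lemma exp_big : forall T, 2 <= T -> exp (- (2 * T)) <= / 8.
Proof. intros T HT.
  assert (A : 3 <= exp 2) by (pose proof (exp_ineq1_le 2); lra).
  assert (B : exp 4 >= 8). { replace 4 with (2 + 2) by ring. rewrite exp_plus. nra. }
  assert (C : exp 4 <= exp (2 * T)).
  { destruct (Req_dec 4 (2 * T)) as [E|E]; [rewrite E; lra|]. left; apply exp_increasing; lra. }
  rewrite exp_Ropp. apply Rinv_le_contravar; lra. Qed.

Lemma ln2_lt_1 : ln 2 < 1.
Proof. rewrite <- (ln_exp 1). apply ln_increasing; [lra|]. pose proof (exp_ineq1 1 ltac:(lra)). lra. Qed.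

Lemma INR_up_nat : forall K, K <= INR (Z.to_nat (up K)).
Proof. intro K. destruct (archimed K) as [A _]. destruct (Z_le_gt_dec 0 (up K)).
  - rewrite INR_IZR_INZ, Z2Nat.id; auto. lra.
  - assert (IZR (up K) < 0) by (apply IZR_lt; lia). pose proof (pos_INR (Z.to_nat (up K))). lra. Qed.

Lemma le_of_div : forall a d N, 0 < d -> a / d <= N -> a <= N * d.
Proof. intros. replace a with (a / d * d) by (field; lra). apply Rmult_le_compat_r; lra. Qed.

Theorem mainTheorem10 :
  forall L1 L2 alpha : R, 0 < L1 -> 0 < L2 -> 0 < alpha ->
  exists bs : nat -> R -> R -> R,
    (forall n, in_Lambda L1 L2 alpha (bs n)) /\
    forall lo hi M : R, exists N : nat, forall n : nat, (N <= n)%nat ->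
      forall lam th : R, lo <= lam <= hi -> 0 <= th < 2 * PI ->
        forall mu : R, is_principal_eig L1 L2 lam th (bs n) mu -> mu <= - M.
Proof.
  intros L1 L2 alpha HL1 HL2 Ha.
  assert (H1 : 0 <= L1) by lra. assert (H2 : 0 <= L2) by lra.
  set (l := Rmin L1 L2).
  assert (Hl : 0 < l) by (apply Rmin_pos; auto).
  assert (Hl1 : l <= L1) by apply Rmin_l. assert (Hl2 : l <= L2) by apply Rmin_r.
  pose proof PI_RGT_0 as HPI.
  set (T := 64 * (PI * PI) / (alpha * (l * l)) + 2).
  assert (HT0 : 0 <= 64 * (PI * PI) / (alpha * (l * l))).
  { apply Rmult_le_pos. nra. left; apply Rinv_0_lt_compat; apply Rmult_lt_0_compat; nra. }
  set (w0 := exp (- (2 * T))).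
  assert (Hw0 : 0 < w0 <= / 8) by (split; [apply exp_pos| apply exp_big; unfold T; lra]).
  assert (Hw0a : 0 < w0) by lra. assert (Hw0b : w0 <= / 8) by lra.
  set (H := Lf w0).
  assert (HH : T - 1 <= H).
  { unfold H, Lf, w0. rewrite ln_exp. pose proof ln2_lt_1. pose proof (exp_pos (- (2 * T))). lra. }
  set (theta := / (2 * (H + 1))).
  assert (HHp : / 8 <= H) by (apply H_ge; auto).
  assert (Hth : 0 < theta) by (unfold theta; apply Rinv_0_lt_compat; lra).
  assert (Hth2 : theta * (Lf w0 + 1) <= / 2) by (fold H; unfold theta; right; field; lra).
  set (c := 2 * (PI * PI) * w0 / (l * l)).
  assert (Hc : 0 < c).
  { unfold c; apply Rdiv_lt_0_compat; [|apply Rmult_lt_0_compat; auto].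
    apply Rmult_lt_0_compat; auto. apply Rmult_lt_0_compat; [lra|]. apply Rmult_lt_0_compat; auto. }
  exists (fun n => bfun L1 L2 alpha (S n) H1 H2).
  split.
  - intro n. apply b_in_Lambda; auto; try lia; lra.
  - intros lo hi M.
    set (K := 4 * (lo * lo + hi * hi) / (c * w0) + Rabs M / (theta * c)).
    exists (Z.to_nat (up K)).
    intros n Hn lam th Hlam Hth' mu Heig.
    set (Om := c * INR (S n)).
    assert (HSn : 1 <= INR (S n)) by (apply (le_INR 1); lia).
    assert (HK : K <= INR (S n)).
    { apply Rle_trans with (INR (Z.to_nat (up K))). apply INR_up_nat. apply le_INR; lia. }
    assert (HOm : 0 < Om) by (unfold Om; apply Rmult_lt_0_compat; lra).
    assert (Hlam2 : lam * lam <= lo * lo + hi * hi).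
    { destruct Hlam. destruct (Rle_dec 0 lam).
      - assert (lam * lam <= hi * hi) by (apply Rmult_le_compat; lra). nra.
      - assert (lam * lam <= lo * lo) by nra. nra. }
    assert (K1 : 4 * (lo * lo + hi * hi) / (c * w0) <= INR (S n)).
    { assert (0 <= Rabs M / (theta * c)) by (apply Rmult_le_pos; [apply Rabs_pos|left; apply Rinv_0_lt_compat; nra]).
      unfold K in HK; lra. }
    assert (K2 : Rabs M / (theta * c) <= INR (S n)).
    { assert (0 <= 4 * (lo * lo + hi * hi) / (c * w0)) by (apply Rmult_le_pos; [nra|left; apply Rinv_0_lt_compat; nra]).
      unfold K in HK; lra. }
    assert (Hbig : 4 * (lam * lam) <= Om * w0).
    { unfold Om. assert (4 * (lo * lo + hi * hi) <= INR (S n) * (c * w0)).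
      { apply le_of_div; auto. apply Rmult_lt_0_compat; lra. }
      nra. }
    assert (HM : M <= theta * Om).
    { unfold Om. assert (Rabs M <= INR (S n) * (theta * c)).
      { apply le_of_div; auto. apply Rmult_lt_0_compat; lra. }
      pose proof (Rle_abs M). nra. }
    assert (Hmu : mu <= - theta * Om).
    { apply (mu_bound L1 L2 lam th (bfun L1 L2 alpha (S n) H1 H2) mu w0 Om theta); auto.
      - intros x y. destruct (b_in_Lambda L1 L2 alpha (S n) H1 H2 HL1 HL2 ltac:(lia) ltac:(lra)) as [_ [Hb _]]. auto.
      - intros x y Hx Hy Hw.
        assert (HB := Bc_lower L1 L2 alpha (S n) H1 H2 HL1 HL2 ltac:(lia) Ha).
        assert (Ex : / 2 <= E L1 (S n) x).
        { apply E_lower; auto; try lia.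
          assert (x * x <= w0 / Om).
          { apply c_le_div; auto. nra. }
          assert (INR (S n) * (PI * PI * (w0 / Om)) / (L1 * L1) <= / 2).
          { replace (INR (S n) * (PI * PI * (w0 / Om)) / (L1 * L1)) with ((l * l) / (2 * (L1 * L1))).
            apply div_le_c. nra. nra.
            unfold Om, c. field. repeat split; try lra; nra. }
          replace (INR (S n) * (PI * x / L1 * (PI * x / L1))) with (INR (S n) * (PI * PI * (x * x)) / (L1 * L1)) by (field; lra).
          apply Rle_trans with (INR (S n) * (PI * PI * (w0 / Om)) / (L1 * L1)); auto.
          unfold Rdiv. apply Rmult_le_compat_r. left; apply Rinv_0_lt_compat; nra.
          apply Rmult_le_compat_l. lra. apply Rmult_le_compat_l. nra. auto. }
        assert (Ey : / 2 <= E L2 (S n) y).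
        { apply E_lower; auto; try lia.
          assert (y * y <= w0 / Om).
          { apply c_le_div; auto. nra. }
          assert (INR (S n) * (PI * PI * (w0 / Om)) / (L2 * L2) <= / 2).
          { replace (INR (S n) * (PI * PI * (w0 / Om)) / (L2 * L2)) with ((l * l) / (2 * (L2 * L2))).
            apply div_le_c. nra. nra.
            unfold Om, c. field. repeat split; try lra; nra. }
          replace (INR (S n) * (PI * y / L2 * (PI * y / L2))) with (INR (S n) * (PI * PI * (y * y)) / (L2 * L2)) by (field; lra).
          apply Rle_trans with (INR (S n) * (PI * PI * (w0 / Om)) / (L2 * L2)); auto.
          unfold Rdiv. apply Rmult_le_compat_r. left; apply Rinv_0_lt_compat; nra.
          apply Rmult_le_compat_l. lra. apply Rmult_le_compat_l. nra. auto. }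
        unfold bfun.
        set (Bv := Bc L1 L2 alpha (S n) H1 H2) in *.
        assert (Bv * E L1 (S n) x * E L2 (S n) y >= alpha * INR (S n) / 4).
        { assert (0 <= alpha * INR (S n)) by nra.
          assert (Bv * E L1 (S n) x >= alpha * INR (S n) / 2) by nra. nra. }
        fold H.
        assert (8 * Om / w0 = 16 * (PI * PI) * INR (S n) / (l * l)) by (unfold Om, c; field; split; lra).
        assert (alpha * INR (S n) / 4 * H >= 16 * (PI * PI) * INR (S n) / (l * l)).
        { assert (64 * (PI * PI) / (alpha * (l * l)) <= H) by (unfold T in HH; lra).
          assert (64 * (PI * PI) <= H * (alpha * (l * l))).
          { apply le_of_div; auto. apply Rmult_lt_0_compat; nra. }
          apply Rle_ge. apply div_le_c. nra.
          nra. }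
        assert (0 <= H) by lra.
        nra. }
    lra.
Qed.
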